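(* Assume $\mathcal R_0>1$ and let $$\lambda>\frac{\big(\beta_E\nu\nu_E-(\nu_E+\delta_E)\delta_F\big)\delta_s}{\gamma_s(\nu_E+\delta_E)\delta_F}.$$ Then $\mathcal M:=\mathcal M(\overline\kappa)$ is positively invariant and $\mathbf 0$ is globally asymptotically stable in $\mathcal M$ (in the Filippov sense) for the closed-loop system $$\dot E=\beta_E F\Big(1-\frac EK\Big)-(\nu_E+\delta_E)E,\quad \dot M=(1-\nu)\nu_E E-\delta_M M,\quad \dot F=\nu\nu_E E\frac{M}{M+\gamma_sM_s}-\delta_F F,\quad \dot M_s=\lambda M-\delta_sM_s.$$
   Context: Parameters: $\beta_E,\nu_E,\delta_E,\delta_M,\delta_F,\delta_s,K>0$, $\nu\in(0,1)$, $\gamma_s\in(0,1]$, $\delta_s\ge\delta_M$. $\mathcal R_0:=\dfrac{\beta_E\nu\nu_E}{\delta_F(\nu_E+\delta_E)}$. $\mathcal D'=[0,+\infty)^4$, $z=(E,M,F,M_s)^T$. $\overline\kappa:=\dfrac{\gamma_s\delta_F(\nu_E+\delta_E)}{\beta_E\nu\nu_E-\delta_F(\nu_E+\delta_E)}$. $\mathcal T_1=\{z\in\mathcal D':\beta_EF(1-E/K)\le(\nu_E+\delta_E)E\}$, $\mathcal T_2(\kappa)=\{z\in\mathcal D':M\le\kappa M_s\}$, $\mathcal T_3=\{z\in\mathcal D':(1-\nu)\nu_EE\le\delta_MM\}$, $\mathcal M(\kappa)=\mathcal T_1\cap\mathcal T_2(\kappa)\cap\mathcal T_3$. Filippov solutions: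 locally Lipschitz $z:I\to\mathcal D'$ with $\dot z(t)\in\bigcap_{\varepsilon>0}\bigcap_{N}\overline{\mathrm{conv}}\,X\big(((z(t)+\varepsilon B)\cap\mathcal D')\setminus N\big)$ for a.e. $t$ ($X$ the closed-loop right-hand side, $B$ unit ball of $\mathbb R^4$, $N$ Lebesgue-null). Globally asymptotically stable in $\mathcal S$: for every $\varepsilon>0$ there is $\delta>0$ such that every Filippov solution with $z(0)\in\mathcal S$, $\|z(0)\|<\delta$ satisfies $\|z(t)\|<\varepsilon$ for all $t>0$, and every Filippov solution with $z(0)\in\mathcal S$ tends to $\mathbf 0$. *)

(* Defs.v *)
From Stdlib Require Import Reals Lra.
Open Scope R_scope.

Record vec4 := mkv { cE : R; cM : R; cF : R; cMs : R }.

Definition vsub (x y : vec4) : vec4 :=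
  mkv (cE x - cE y) (cM x - cM y) (cF x - cF y) (cMs x - cMs y).

Definition vnorm (x : vec4) : R :=
  sqrt (cE x ^ 2 + cM x ^ 2 + cF x ^ 2 + cMs x ^ 2).

Definition in_D' (z : vec4) : Prop :=
  0 <= cE z /\ 0 <= cM z /\ 0 <= cF z /\ 0 <= cMs z.

(** Where M + gammas*Ms = 0 (a Lebesgue-null subset of D') the value is
    whatever Stdlib's total division gives; it is irrelevant for Filippov
    solutions since null sets are discarded. *)
Definition Xcl (betaE nuE deltaE deltaM deltaF deltas K nu gammas lambda : R)
  (z : vec4) : vec4 :=
  let E := cE z in let M := cM z in let F := cF z in let Ms := cMs z in
  mkv (betaE * F * (1 - E / K) - (nuE + deltaE) * E)
      ((1 - nu) * nuE * E - deltaM * M)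
      (nu * nuE * E * (M / (M + gammas * Ms)) - deltaF * F)
      (lambda * M - deltas * Ms).

(** Lebesgue-null sets of R^4: coverable by countably many closed boxes of
    arbitrarily small total volume. *)
Definition in_box (a b z : vec4) : Prop :=
  cE a <= cE z <= cE b /\ cM a <= cM z <= cM b /\
  cF a <= cF z <= cF b /\ cMs a <= cMs z <= cMs b.

Definition box_vol (a b : vec4) : R :=
  (cE b - cE a) * (cM b - cM a) * (cF b - cF a) * (cMs b - cMs a).

Definition null4 (N : vec4 -> Prop) : Prop :=
  forall eps, 0 < eps ->
  exists a b : nat -> vec4,
    (forall k, cE (a k) <= cE (b k) /\ cM (a k) <= cM (b k) /\
               cF (a k) <= cF (b k) /\ cMs (a k) <= cMs (b k)) /\
    (forall z, N z -> exists k, in_box (a k) (b k) z) /\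
    (forall n, sum_f_R0 (fun k => box_vol (a k) (b k)) n <= eps).

Definition null1 (N : R -> Prop) : Prop :=
  forall eps, 0 < eps ->
  exists a b : nat -> R,
    (forall k, a k <= b k) /\
    (forall t, N t -> exists k, a k <= t <= b k) /\
    (forall n, sum_f_R0 (fun k => b k - a k) n <= eps).

Definition conv (S : vec4 -> Prop) (x : vec4) : Prop :=
  exists (n : nat) (w : nat -> R) (p : nat -> vec4),
    (forall i, (i <= n)%nat -> 0 <= w i /\ S (p i)) /\
    sum_f_R0 w n = 1 /\
    cE x = sum_f_R0 (fun i => w i * cE (p i)) n /\
    cM x = sum_f_R0 (fun i => w i * cM (p i)) n /\
    cF x = sum_f_R0 (fun i => w i * cF (p i)) n /\
    cMs x = sum_f_R0 (fun i => w i * cMs (p i)) n.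

Definition closure4 (S : vec4 -> Prop) (x : vec4) : Prop :=
  forall d, 0 < d -> exists y, S y /\ vnorm (vsub x y) < d.

Definition filippov_set (X : vec4 -> vec4) (z : vec4) (v : vec4) : Prop :=
  forall eps, 0 < eps -> forall N : vec4 -> Prop, null4 N ->
    closure4 (conv (fun y => exists w, vnorm (vsub w z) <= eps /\ in_D' w /\
                                       ~ N w /\ y = X w)) v.

(** Time domain [0, T) with T = Some T (T > 0) or [0, +oo) with None. *)
Definition in_dom (Tmax : option R) (t : R) : Prop :=
  0 <= t /\ match Tmax with Some T => t < T | None => True end.

Definition has_deriv4 (z : R -> vec4) (t : R) (v : vec4) : Prop :=
  derivable_pt_lim (fun s => cE (z s)) t (cE v) /\
  derivable_pt_lim (fun s => cM (z s)) t (cM v) /\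
  derivable_pt_lim (fun s => cF (z s)) t (cF v) /\
  derivable_pt_lim (fun s => cMs (z s)) t (cMs v).

Definition filippov_sol (X : vec4 -> vec4) (Tmax : option R) (z : R -> vec4)
  : Prop :=
  (match Tmax with Some T => 0 < T | None => True end) /\
  (forall t, in_dom Tmax t -> in_D' (z t)) /\
  (forall b, in_dom Tmax b -> exists L, forall s t,
      0 <= s <= b -> 0 <= t <= b ->
      vnorm (vsub (z s) (z t)) <= L * Rabs (s - t)) /\
  (exists Nt, null1 Nt /\ forall t, 0 < t -> in_dom Tmax t -> ~ Nt t ->
      exists v, has_deriv4 z t v /\ filippov_set X (z t) v).

Definition pos_invariant (X : vec4 -> vec4) (S : vec4 -> Prop) : Prop :=
  forall Tmax z, filippov_sol X Tmax z -> S (z 0) ->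
    forall t, in_dom Tmax t -> S (z t).

Definition GAS_in (X : vec4 -> vec4) (S : vec4 -> Prop) : Prop :=
  (forall eps, 0 < eps -> exists d, 0 < d /\
     forall Tmax z, filippov_sol X Tmax z -> S (z 0) -> vnorm (z 0) < d ->
       forall t, 0 < t -> in_dom Tmax t -> vnorm (z t) < eps) /\
  (forall z, filippov_sol X None z -> S (z 0) ->
     forall eps, 0 < eps -> exists T, forall t, T <= t -> vnorm (z t) < eps).

Definition T1set (betaE nuE deltaE K : R) (z : vec4) : Prop :=
  in_D' z /\ betaE * cF z * (1 - cE z / K) <= (nuE + deltaE) * cE z.
Definition T2set (kappa : R) (z : vec4) : Prop :=
  in_D' z /\ cM z <= kappa * cMs z.
Definition T3set (nu nuE deltaM : R) (z : vec4) : Prop :=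
  in_D' z /\ (1 - nu) * nuE * cE z <= deltaM * cM z.
Definition Mset (betaE nuE deltaE deltaM K nu kappa : R) (z : vec4) : Prop :=
  T1set betaE nuE deltaE K z /\ T2set kappa z /\ T3set nu nuE deltaM z.

Definition calR0 (betaE nuE deltaE deltaF nu : R) : R :=
  betaE * nu * nuE / (deltaF * (nuE + deltaE)).

Definition kappa_bar (betaE nuE deltaE deltaF nu gammas : R) : R :=
  gammas * deltaF * (nuE + deltaE) /
  (betaE * nu * nuE - deltaF * (nuE + deltaE)).

(* Main.v *)
Require Import Defs.
From Stdlib Require Import Reals.
Open Scope R_scope.
From Stdlib Require Import Reals Lra Lia Psatz.
From Coquelicot Require Import Rbar Lim_seq.
Require Import Defs.
From Stdlib Require Import Classical FunctionalExtensionality.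
Open Scope R_scope.

Lemma dpl_val f x l1 l2 : derivable_pt_lim f x l1 -> l1 = l2 -> derivable_pt_lim f x l2.
Proof. intros H ->; exact H. Qed.

Lemma D_plus f g x df dg : derivable_pt_lim f x df -> derivable_pt_lim g x dg ->
  derivable_pt_lim (fun s => f s + g s) x (df + dg).
Proof. intros; apply (derivable_pt_lim_plus f g); auto. Qed.

Lemma D_minus f g x df dg : derivable_pt_lim f x df -> derivable_pt_lim g x dg ->
  derivable_pt_lim (fun s => f s - g s) x (df - dg).
Proof. intros; apply (derivable_pt_lim_minus f g); auto. Qed.

Lemma D_mult f g x df dg : derivable_pt_lim f x df -> derivable_pt_lim g x dg ->
  derivable_pt_lim (fun s => f s * g s) x (df * g x + f x * dg).
Proof. intros; apply (derivable_pt_lim_mult f g); auto. Qed.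

Lemma D_const c x : derivable_pt_lim (fun _ => c) x 0.
Proof. apply derivable_pt_lim_const. Qed.

Lemma D_id x : derivable_pt_lim (fun s => s) x 1.
Proof. apply derivable_pt_lim_id. Qed.

Lemma D_scal c f x df : derivable_pt_lim f x df ->
  derivable_pt_lim (fun s => c * f s) x (c * df).
Proof. intros H. eapply dpl_val. apply D_mult. apply D_const. exact H. cbv beta; ring. Qed.

Lemma D_divc f x df K : derivable_pt_lim f x df ->
  derivable_pt_lim (fun s => f s / K) x (df / K).
Proof. intros H. eapply dpl_val. apply (D_mult f (fun _ => / K)). exact H. apply D_const.
  cbv beta; unfold Rdiv; ring. Qed.

Lemma D_comp phi f x dphi df : derivable_pt_lim f x df -> derivable_pt_lim phi (f x) dphi ->
  derivable_pt_lim (fun s => phi (f s)) x (dphi * df).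
Proof. intros H1 H2. apply (derivable_pt_lim_comp f phi); auto. Qed.

Lemma D_exp x : derivable_pt_lim exp x (exp x).
Proof. apply derivable_pt_lim_exp. Qed.

Definition Pp (x : R) := Rmax x 0.
Definition sqp (x : R) := Pp x * Pp x.

Lemma Pp_ge0 x : 0 <= Pp x.
Proof. unfold Pp. apply Rmax_r. Qed.
Lemma Pp_ge x : x <= Pp x.
Proof. unfold Pp. apply Rmax_l. Qed.
Lemma Pp_mul x : Pp x * x = sqp x.
Proof. unfold sqp, Pp. destruct (Rle_dec x 0).
  rewrite Rmax_right; auto; ring. rewrite Rmax_left; lra. Qed.
Lemma sqp_ge0 x : 0 <= sqp x.
Proof. unfold sqp. pose proof (Pp_ge0 x). nra. Qed.
Lemma sqp_zero x : x <= 0 -> sqp x = 0.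
Proof. intros. unfold sqp, Pp. rewrite Rmax_right; auto; ring. Qed.
Lemma sqp_le0 x : sqp x <= 0 -> x <= 0.
Proof. unfold sqp, Pp. destruct (Rle_dec x 0); auto. rewrite Rmax_left; nra. Qed.

Lemma sqp_taylor x h : Rabs (sqp (x + h) - sqp x - 2 * Pp x * h) <= h * h.
Proof.
  unfold sqp, Pp.
  destruct (Rle_dec x 0) as [H1|H1]; destruct (Rle_dec (x+h) 0) as [H2|H2].
  - rewrite (Rmax_right x), (Rmax_right (x+h)); auto. replace (0*0-0*0-2*0*h) with 0 by ring. rewrite Rabs_R0; nra.
  - rewrite (Rmax_right x), (Rmax_left (x+h)); try lra.
    rewrite Rabs_right; nra.
  - rewrite (Rmax_left x), (Rmax_right (x+h)); try lra.
    rewrite Rabs_right; nra.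
  - rewrite (Rmax_left x), (Rmax_left (x+h)); try lra.
    replace ((x + h) * (x + h) - x * x - 2 * x * h) with (h*h) by ring.
    rewrite Rabs_right; nra.
Qed.

Lemma D_sqp x : derivable_pt_lim sqp x (2 * Pp x).
Proof.
  intros eps Heps. exists (mkposreal eps Heps). intros h Hh Hlt. simpl in Hlt.
  pose proof (sqp_taylor x h) as T.
  replace ((sqp (x + h) - sqp x) / h - 2 * Pp x) with ((sqp (x + h) - sqp x - 2 * Pp x * h) / h)
    by (field; auto).
  unfold Rdiv. rewrite Rabs_mult, Rabs_inv.
  apply Rle_lt_trans with (h * h * / Rabs h).
  - apply Rmult_le_compat_r; [ left; apply Rinv_0_lt_compat; apply Rabs_pos_lt; auto | auto].
  - replace (h * h) with (Rabs h * Rabs h) by (rewrite <- Rabs_mult; rewrite Rabs_right; nra).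
    rewrite Rmult_assoc, Rinv_r by (apply Rabs_no_R0; auto). lra.
Qed.

Definition Lip (a b : R) (f : R -> R) :=
  exists L, forall s t, a <= s <= b -> a <= t <= b -> Rabs (f s - f t) <= L * Rabs (s - t).

Lemma Lip_pos a b f : Lip a b f -> exists L, 0 <= L /\
  forall s t, a <= s <= b -> a <= t <= b -> Rabs (f s - f t) <= L * Rabs (s - t).
Proof. intros [L HL]. exists (Rabs L). split. apply Rabs_pos. intros s t Hs Ht.
  eapply Rle_trans. apply HL; auto. apply Rmult_le_compat_r. apply Rabs_pos. apply RRle_abs. Qed.

Lemma Lip_bnd a b f : a <= b -> Lip a b f -> exists B, forall t, a <= t <= b -> Rabs (f t) <= B.
Proof. intros Hab H. destruct (Lip_pos _ _ _ H) as [L [HL0 HL]].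
  exists (Rabs (f a) + L * (b - a)). intros t Ht.
  specialize (HL t a Ht ltac:(lra)).
  rewrite (Rabs_right (t - a)) in HL by lra.
  pose proof (Rabs_triang_inv (f t) (f a)). nra. Qed.

Lemma Lip_const a b c : Lip a b (fun _ => c).
Proof. exists 0. intros. replace (c - c) with 0 by ring. rewrite Rabs_R0. lra. Qed.

Lemma Lip_id a b : Lip a b (fun s => s).
Proof. exists 1. intros. rewrite Rmult_1_l; apply Rle_refl. Qed.

Lemma Lip_plus a b f g : Lip a b f -> Lip a b g -> Lip a b (fun s => f s + g s).
Proof. intros [L1 H1] [L2 H2]. exists (L1 + L2). intros s t Hs Ht.
  replace (f s + g s - (f t + g t)) with ((f s - f t) + (g s - g t)) by ring.
  eapply Rle_trans. apply Rabs_triang. specialize (H1 s t Hs Ht). specialize (H2 s t Hs Ht). lra. Qed.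

Lemma Lip_opp a b f : Lip a b f -> Lip a b (fun s => - f s).
Proof. intros [L1 H1]. exists L1. intros s t Hs Ht.
  replace (- f s - - f t) with (- (f s - f t)) by ring. rewrite Rabs_Ropp. auto. Qed.

Lemma Lip_minus a b f g : Lip a b f -> Lip a b g -> Lip a b (fun s => f s - g s).
Proof. intros H1 H2. apply (Lip_plus a b f (fun s => - g s)); auto. apply Lip_opp; auto. Qed.

Lemma Lip_mult a b f g : a <= b -> Lip a b f -> Lip a b g -> Lip a b (fun s => f s * g s).
Proof. intros Hab H1 H2.
  destruct (Lip_bnd _ _ _ Hab H1) as [B1 HB1]. destruct (Lip_bnd _ _ _ Hab H2) as [B2 HB2].
  destruct (Lip_pos _ _ _ H1) as [L1 [HL1 H1']]. destruct (Lip_pos _ _ _ H2) as [L2 [HL2 H2']].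
  exists (L1 * B2 + B1 * L2). intros s t Hs Ht.
  replace (f s * g s - f t * g t) with ((f s - f t) * g s + f t * (g s - g t)) by ring.
  eapply Rle_trans. apply Rabs_triang. rewrite !Rabs_mult.
  specialize (H1' s t Hs Ht). specialize (H2' s t Hs Ht).
  specialize (HB1 t Ht). specialize (HB2 s Hs).
  pose proof (Rabs_pos (f s - f t)). pose proof (Rabs_pos (g s)).
  pose proof (Rabs_pos (f t)). pose proof (Rabs_pos (g s - g t)). pose proof (Rabs_pos (s - t)).
  apply Rle_trans with (L1 * Rabs (s - t) * B2 + B1 * (L2 * Rabs (s - t))).
  apply Rplus_le_compat. apply Rmult_le_compat; auto. apply Rmult_le_compat; auto. lra. Qed.

Lemma Lip_scal a b c f : Lip a b f -> Lip a b (fun s => c * f s).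
Proof. intros [L H]. exists (Rabs c * L). intros s t Hs Ht.
  replace (c * f s - c * f t) with (c * (f s - f t)) by ring. rewrite Rabs_mult.
  rewrite Rmult_assoc. apply Rmult_le_compat_l. apply Rabs_pos. auto. Qed.

Definition locLip (phi : R -> R) := forall B, exists L, forall x y, Rabs x <= B -> Rabs y <= B ->
  Rabs (phi x - phi y) <= L * Rabs (x - y).

Lemma Lip_comp a b phi f : a <= b -> locLip phi -> Lip a b f -> Lip a b (fun s => phi (f s)).
Proof. intros Hab Hphi H. destruct (Lip_bnd _ _ _ Hab H) as [B HB].
  destruct (Hphi B) as [L HL]. destruct (Lip_pos _ _ _ H) as [L1 [HL1 H1]].
  exists (Rabs L * L1). intros s t Hs Ht.
  eapply Rle_trans. apply HL; auto. rewrite Rmult_assoc.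
  apply Rle_trans with (Rabs L * Rabs (f s - f t)).
  apply Rmult_le_compat_r. apply Rabs_pos. apply RRle_abs.
  apply Rmult_le_compat_l. apply Rabs_pos. auto. Qed.

Lemma sqp_locLip : locLip sqp.
Proof. intros B. exists (2 * Rabs B). intros x y Hx Hy. unfold sqp, Pp.
  assert (Hp : forall u v, Rabs (Rmax u 0 - Rmax v 0) <= Rabs (u - v)).
  { intros u v. unfold Rmax. destruct (Rle_dec u 0), (Rle_dec v 0);
    unfold Rabs; repeat destruct Rcase_abs; lra. }
  replace (Rmax x 0 * Rmax x 0 - Rmax y 0 * Rmax y 0) with
     ((Rmax x 0 - Rmax y 0) * (Rmax x 0 + Rmax y 0)) by ring.
  rewrite Rabs_mult.
  assert (Rabs (Rmax x 0 + Rmax y 0) <= 2 * Rabs B).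
  { unfold Rmax. destruct (Rle_dec x 0), (Rle_dec y 0); revert Hx Hy;
    unfold Rabs; repeat destruct Rcase_abs; lra. }
  pose proof (Hp x y). pose proof (Rabs_pos (Rmax x 0 - Rmax y 0)).
  pose proof (Rabs_pos (Rmax x 0 + Rmax y 0)).
  rewrite (Rmult_comm (2 * Rabs B)). apply Rmult_le_compat; auto. Qed.

Lemma exp_locLip : locLip exp.
Proof. intros B. exists (exp (Rabs B)). intros x y Hx Hy.
  destruct (Req_dec x y) as [->|Hne]. replace (y - y) with 0 by ring. replace (exp y - exp y) with 0 by ring. rewrite Rabs_R0. lra.
  assert (Hgen : forall u v, u < v -> Rabs u <= B -> Rabs v <= B ->
     Rabs (exp u - exp v) <= exp (Rabs B) * Rabs (u - v)).
  { intros u v Huv Hu Hv. destruct (MVT_cor2 exp exp u v Huv (fun c _ => D_exp c)) as [c [Hc1 Hc2]].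
    rewrite <- Rabs_Ropp. replace (- (exp u - exp v)) with (exp v - exp u) by ring.
    rewrite Hc1. rewrite Rabs_mult. rewrite (Rabs_right (exp c)) by (left; apply exp_pos).
    replace (Rabs (v - u)) with (Rabs (u - v)) by (rewrite <- Rabs_Ropp; f_equal; ring).
    apply Rmult_le_compat_r. apply Rabs_pos.
    destruct (Rle_lt_or_eq_dec c (Rabs B)). revert Hv; unfold Rabs; repeat destruct Rcase_abs; lra.
    left; apply exp_increasing; auto. rewrite e; lra. }
  destruct (Rlt_or_le x y). apply Hgen; auto.
  rewrite <- Rabs_Ropp. replace (- (exp x - exp y)) with (exp y - exp x) by ring.
  replace (Rabs (x - y)) with (Rabs (y - x)) by (rewrite <- Rabs_Ropp; f_equal; ring).
  apply Hgen; auto. lra. Qed.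

Definition lenI (t0 a d t : R) := Rmax 0 (Rmin t d - Rmax t0 a).
Definition mun (t0 : R) (a d : nat -> R) (n : nat) (t : R) :=
  sum_f_R0 (fun k => lenI t0 (a k) (d k) t) n.

Lemma lenI_ge0 t0 a d t : 0 <= lenI t0 a d t.
Proof. unfold lenI. apply Rmax_l. Qed.
Lemma lenI_le t0 a d t : a <= d -> lenI t0 a d t <= d - a.
Proof. intros. unfold lenI. apply Rmax_lub. lra.
  pose proof (Rmin_r t d). pose proof (Rmax_r t0 a). lra. Qed.
Lemma lenI_mono t0 a d t s : t <= s -> lenI t0 a d t <= lenI t0 a d s.
Proof. intros. unfold lenI. apply Rle_max_compat_l.
  assert (Rmin t d <= Rmin s d). { unfold Rmin. destruct (Rle_dec t d), (Rle_dec s d); lra. } lra. Qed.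
Lemma lenI_inc t0 a d t s : t0 <= t -> t <= s -> a <= t -> s <= d ->
  lenI t0 a d s - lenI t0 a d t = s - t.
Proof. intros. unfold lenI. rewrite (Rmin_left s d), (Rmin_left t d) by lra.
  assert (Rmax t0 a <= t) by (apply Rmax_lub; lra).
  rewrite (Rmax_right 0 (s - Rmax t0 a)), (Rmax_right 0 (t - Rmax t0 a)) by lra. ring. Qed.

Lemma sum_le_gen (f g : nat -> R) n : (forall k, (k <= n)%nat -> f k <= g k) ->
  sum_f_R0 f n <= sum_f_R0 g n.
Proof. induction n; intros H; simpl. apply H; lia.
  apply Rplus_le_compat. apply IHn; intros; apply H; lia. apply H; lia. Qed.

Lemma sum_ge0_gen (f : nat -> R) n : (forall k, 0 <= f k) -> 0 <= sum_f_R0 f n.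
Proof. induction n; intros H; simpl. apply H. pose proof (H (S n)). pose proof (IHn H). lra. Qed.

Lemma mun_bound t0 a d B n t : (forall k, a k <= d k) ->
  (forall n, sum_f_R0 (fun k => d k - a k) n <= B) -> mun t0 a d n t <= B.
Proof. intros H1 H2. eapply Rle_trans; [|apply (H2 n)]. unfold mun.
  apply sum_le_gen. intros. apply lenI_le; auto. Qed.

Lemma mun_incr t0 a d n t : mun t0 a d n t <= mun t0 a d (S n) t.
Proof. unfold mun. simpl. pose proof (lenI_ge0 t0 (a (S n)) (d (S n)) t). lra. Qed.

Definition mu (t0 : R) (a d : nat -> R) (t : R) : R := real (Lim_seq (fun n => mun t0 a d n t)).

Lemma mu_lim t0 a d B t : (forall k, a k <= d k) ->
  (forall n, sum_f_R0 (fun k => d k - a k) n <= B) ->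
  is_lim_seq (fun n => mun t0 a d n t) (mu t0 a d t).
Proof. intros H1 H2.
  destruct (ex_finite_lim_seq_incr (fun n => mun t0 a d n t) B (fun n => mun_incr t0 a d n t)
     (fun n => mun_bound t0 a d B n t H1 H2)) as [l Hl].
  unfold mu. rewrite (is_lim_seq_unique _ _ Hl). simpl. exact Hl. Qed.

Lemma mu_props t0 a d B : (forall k, a k <= d k) ->
  (forall n, sum_f_R0 (fun k => d k - a k) n <= B) ->
  (forall t, 0 <= mu t0 a d t <= B) /\
  (forall t s, t <= s -> mu t0 a d t <= mu t0 a d s) /\
  (forall k t s, t0 <= t -> t <= s -> a k <= t -> s <= d k -> s - t <= mu t0 a d s - mu t0 a d t).
Proof. intros H1 H2. split; [|split].
  - intros t. pose proof (mu_lim t0 a d B t H1 H2) as L. split.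
    + assert (HH := is_lim_seq_le (fun _ => 0) _ 0 _
         (fun n => sum_ge0_gen _ n (fun k => lenI_ge0 _ _ _ _)) (is_lim_seq_const 0) L). simpl in HH; auto.
    + assert (HH := is_lim_seq_le _ (fun _ => B) _ B
         (fun n => mun_bound t0 a d B n t H1 H2) L (is_lim_seq_const B)). simpl in HH; auto.
  - intros t s Hts. pose proof (mu_lim t0 a d B t H1 H2) as L1. pose proof (mu_lim t0 a d B s H1 H2) as L2.
    assert (HH := is_lim_seq_le _ _ _ _ (fun n => sum_le_gen _ _ n (fun k _ => lenI_mono t0 (a k) (d k) t s Hts)) L1 L2).
    simpl in HH; auto.
  - intros k t s H0 Hts Hat Hsd.
    pose proof (is_lim_seq_minus' _ _ _ _ (mu_lim t0 a d B s H1 H2) (mu_lim t0 a d B t H1 H2)) as L.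
    apply (is_lim_seq_incr_n _ k) in L.
    assert (Hc : forall n, s - t <= mun t0 a d (n + k) s - mun t0 a d (n + k) t).
    { intros n. unfold mun.
      assert (Hgen : forall m, (k <= m)%nat -> s - t <=
         sum_f_R0 (fun j => lenI t0 (a j) (d j) s) m - sum_f_R0 (fun j => lenI t0 (a j) (d j) t) m).
      { induction m; intros Hm.
        - assert (k = 0%nat) by lia. subst. simpl. rewrite lenI_inc; auto; lra.
        - destruct (Nat.eq_dec k (S m)) as [Hk|Hk].
          + subst k. simpl.
            assert (0 <= sum_f_R0 (fun j => lenI t0 (a j) (d j) s) m - sum_f_R0 (fun j => lenI t0 (a j) (d j) t) m).
            { rewrite <- (Rminus_diag_eq 0 0 eq_refl).
              pose proof (sum_le_gen (fun j => lenI t0 (a j) (d j) t) (fun j => lenI t0 (a j) (d j) s) m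
                (fun j _ => lenI_mono _ _ _ _ _ Hts)). lra. }
            pose proof (lenI_inc t0 (a (S m)) (d (S m)) t s H0 Hts Hat Hsd). lra.
          + simpl. pose proof (IHm ltac:(lia)).
            pose proof (lenI_mono t0 (a (S m)) (d (S m)) t s Hts). lra. }
      apply Hgen; lia. }
    assert (HH := is_lim_seq_le _ _ _ _ Hc (is_lim_seq_const (s - t)) L). simpl in HH; auto.
Qed.

Lemma sum_scal c f n : sum_f_R0 (fun k => c * f k) n = c * sum_f_R0 f n.
Proof. induction n. simpl. ring. rewrite !tech5, IHn. ring. Qed.

Lemma geo n : sum_f_R0 (fun k => (/2)^(S k)) n <= 1.
Proof. assert (forall n, sum_f_R0 (fun k => (/2)^(S k)) n = 1 - (/2)^(S n)).
  { induction n0. simpl. field. rewrite tech5. rewrite IHn0. simpl. field. }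
  rewrite H. pose proof (pow_lt (/2) (S n) ltac:(lra)). lra. Qed.

Lemma creep (h : R -> R) t0 t1 : t0 <= t1 -> h t0 <= 0 ->
  (forall m, t0 < m <= t1 -> (forall u, t0 <= u < m -> h u <= 0) -> h m <= 0) ->
  (forall m, t0 <= m < t1 -> h m <= 0 -> exists r, 0 < r /\
      forall u, m <= u <= m + r -> u <= t1 -> h u <= 0) ->
  h t1 <= 0.
Proof.
  intros H01 Ht0 Hleft Hright.
  set (E := fun s => t0 <= s <= t1 /\ forall u, t0 <= u <= s -> h u <= 0).
  assert (Hb : bound E). { exists t1. intros s [Hs _]. lra. }
  assert (He : exists x, E x). { exists t0. split. lra. intros u Hu. replace u with t0 by lra. auto. }
  destruct (completeness E Hb He) as [m [Hub Hlub]].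
  assert (Hm0 : t0 <= m). { apply Hub. destruct He as [x Hx]. unfold E. split. lra. intros u Hu. replace u with t0 by lra. auto. }
  assert (Hm1 : m <= t1). { apply Hlub. intros s [Hs _]. lra. }
  assert (Hi : forall u, t0 <= u < m -> h u <= 0).
  { intros u Hu. destruct (classic (exists s, E s /\ u < s)) as [[s [[Hs1 Hs2] Hus]]|Hn].
    - apply Hs2. lra.
    - exfalso. assert (m <= u). { apply Hlub. intros s Hs. destruct (Rle_dec s u); auto.
        exfalso; apply Hn; exists s; split; auto; lra. } lra. }
  assert (Hii : h m <= 0). { destruct (Req_dec m t0) as [->|]; auto. apply Hleft; auto. lra. }
  assert (Hiii : forall u, t0 <= u <= m -> h u <= 0).
  { intros u Hu. destruct (Req_dec u m) as [->|]; auto. apply Hi; lra. }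
  destruct (Req_dec m t1) as [<-|Hne]; auto.
  destruct (Hright m ltac:(lra) Hii) as [r [Hr Hstep]].
  set (s' := Rmin (m + r) t1).
  assert (E s').
  { unfold s'. split. unfold Rmin; destruct Rle_dec; lra.
    intros u Hu. destruct (Rle_dec u m). apply Hiii; lra.
    apply Hstep; unfold Rmin in Hu; destruct Rle_dec in Hu; lra. }
  assert (s' <= m) by (apply Hub; auto). unfold s', Rmin in *; destruct Rle_dec in *; lra.
Qed.

Lemma mono_aux f t0 t1 N : t0 <= t1 -> null1 N -> Lip t0 t1 f ->
  (forall t, t0 <= t < t1 -> ~ N t -> exists d, derivable_pt_lim f t d /\ d <= 0) ->
  f t1 <= f t0.
Proof.
  intros H01 HN HL Hd.
  destruct (Lip_pos _ _ _ HL) as [L [HL0 HLf]].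
  apply Rnot_gt_le. intro Hgt.
  set (ε := f t1 - f t0). assert (Hε : 0 < ε) by (unfold ε; lra).
  set (e1 := ε / (4 * (t1 - t0 + 1))).
  set (δ := ε / (4 * (L + 1))).
  assert (He1 : 0 < e1) by (unfold e1, ε; apply Rdiv_lt_0_compat; lra).
  assert (Hδ : 0 < δ) by (unfold δ, ε; apply Rdiv_lt_0_compat; lra).
  destruct (HN δ Hδ) as [a [b [Hab [Hcov Hsum]]]].
  set (d := fun k => b k + δ * (/2)^(S k)).
  assert (Had : forall k, a k <= d k).
  { intros k. unfold d. pose proof (Hab k). pose proof (pow_lt (/2) (S k) ltac:(lra)). nra. }
  assert (Hsd : forall n, sum_f_R0 (fun k => d k - a k) n <= 2 * δ).
  { intros n. unfold d.
    replace (fun k => b k + δ * (/2)^(S k) - a k) with (fun k => (b k - a k) + δ * (/2)^(S k))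
      by (apply functional_extensionality; intros; ring).
    rewrite plus_sum. rewrite sum_scal. pose proof (Hsum n). pose proof (geo n).
    nra. }
  destruct (mu_props t0 a d (2*δ) Had Hsd) as [Mb [Mm Mi]].
  set (h := fun t => f t - f t0 - e1 * (t - t0) - L * mu t0 a d t).
  assert (Hh : h t1 <= 0).
  { apply (creep h t0 t1 H01).
    - unfold h. pose proof (Mb t0). nra.
    - intros m Hm Hu. apply Rnot_gt_le. intro Hpos.
      set (u := Rmax t0 (m - h m / (2 * (L + 1)))).
      assert (Hu1 : t0 <= u < m).
      { unfold u. split. apply Rmax_l. apply Rmax_lub_lt. lra.
        assert (0 < h m / (2 * (L+1))) by (apply Rdiv_lt_0_compat; lra). lra. }
      assert (Hu2 : m - u <= h m / (2 * (L + 1))).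
      { unfold u. pose proof (Rmax_r t0 (m - h m / (2 * (L + 1)))). lra. }
      specialize (Hu u Hu1). pose proof (HLf m u ltac:(lra) ltac:(lra)) as Hl.
      rewrite (Rabs_right (m - u)) in Hl by lra. pose proof (Rle_abs (f m - f u)).
      pose proof (Mm u m ltac:(lra)).
      assert (h m <= h u + L * (m - u)) by (unfold h in *; nra).
      assert (L * (m - u) <= L * (h m / (2 * (L + 1)))) by (apply Rmult_le_compat_l; lra).
      assert (L * (h m / (2 * (L + 1))) < h m).
      { unfold Rdiv. rewrite <- Rmult_assoc. apply Rlt_le_trans with ((L+1) * h m * / (2 * (L + 1))).
        apply Rmult_lt_compat_r. apply Rinv_0_lt_compat; lra. nra.
        replace ((L+1) * h m * / (2 * (L + 1))) with (h m / 2) by (field; lra). lra. }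
      lra.
    - intros m Hm Hhm. destruct (classic (N m)) as [HNm|HNm].
      + destruct (Hcov m HNm) as [k Hk].
        exists (δ * (/2)^(S k)). split. apply Rmult_lt_0_compat; auto. apply pow_lt; lra.
        intros u Hu Hut.
        pose proof (Mi k m u ltac:(lra) ltac:(lra) ltac:(lra) ltac:(unfold d; lra)).
        pose proof (HLf u m ltac:(lra) ltac:(lra)) as Hl.
        rewrite (Rabs_right (u - m)) in Hl by lra. pose proof (Rle_abs (f u - f m)).
        unfold h in *. nra.
      + destruct (Hd m Hm HNm) as [dv [Hdv Hdv0]].
        destruct (Hdv e1 He1) as [δ' Hδ'].
        exists (δ' / 2). split. pose proof (cond_pos δ'). lra.
        intros u Hu Hut. destruct (Req_dec u m) as [->|Hne]; auto.
        specialize (Hδ' (u - m) ltac:(lra)).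
        assert (Habs : Rabs (u - m) < δ') by (rewrite Rabs_right; pose proof (cond_pos δ'); lra).
        specialize (Hδ' Habs). replace (m + (u - m)) with u in Hδ' by ring.
        apply Rabs_def2 in Hδ'. destruct Hδ' as [Hq _].
        assert (Hq' : (f u - f m) < (dv + e1) * (u - m)).
        { assert (Hpos : 0 < u - m) by lra.
          assert ((f u - f m) / (u - m) < dv + e1) by lra.
          apply (Rmult_lt_compat_r (u - m)) in H; auto.
          unfold Rdiv in H. rewrite Rmult_assoc, Rinv_l in H by lra. lra. }
        pose proof (Mm m u ltac:(lra)).
        unfold h in *. nra. }
  unfold h in Hh. pose proof (Mb t1).
  assert (e1 * (t1 - t0) <= ε / 4).
  { unfold e1. unfold Rdiv. apply Rle_trans with (ε * / (4 * (t1 - t0 + 1)) * (t1 - t0 + 1)).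
    apply Rmult_le_compat_l. apply Rmult_le_pos. lra. left; apply Rinv_0_lt_compat; lra. lra.
    right. field. lra. }
  assert (L * mu t0 a d t1 <= L * (2 * δ)) by (apply Rmult_le_compat_l; lra).
  assert (L * (2 * δ) <= ε / 2).
  { unfold δ. unfold Rdiv. apply Rle_trans with ((L + 1) * (2 * (ε * / (4 * (L + 1))))).
    apply Rmult_le_compat_r. apply Rmult_le_pos. lra. apply Rmult_le_pos. lra. left; apply Rinv_0_lt_compat; lra. lra.
    right. field. lra. }
  assert (ε = f t1 - f t0) by reflexivity. lra.
Qed.

Lemma Lip_sub a b a' b' f : Lip a b f -> a <= a' -> b' <= b -> Lip a' b' f.
Proof. intros [L H] H1 H2. exists L. intros s t Hs Ht. apply H; lra. Qed.

Lemma mono f t0 t1 N : t0 <= t1 -> null1 N -> Lip t0 t1 f ->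
  (forall t, t0 < t < t1 -> ~ N t -> exists d, derivable_pt_lim f t d /\ d <= 0) ->
  f t1 <= f t0.
Proof.
  intros H01 HN HL Hd. destruct (Req_dec t0 t1) as [->|Hne]. lra.
  destruct (Lip_pos _ _ _ HL) as [L [HL0 HLf]].
  assert (Hs : forall s, t0 < s < t1 -> f t1 <= f s).
  { intros s Hs. apply (mono_aux f s t1 N). lra. auto. apply (Lip_sub t0 t1 s t1 f HL); lra.
    intros t Ht HNt; apply Hd; auto; lra. }
  apply Rnot_gt_le. intro Hgt.
  set (s := t0 + Rmin ((t1 - t0) / 2) ((f t1 - f t0) / (2 * (L + 1)))).
  assert (Hp1 : 0 < (t1 - t0) / 2) by lra.
  assert (Hp2 : 0 < (f t1 - f t0) / (2 * (L + 1))) by (apply Rdiv_lt_0_compat; lra).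
  assert (Hs1 : t0 < s < t1).
  { unfold s. unfold Rmin. destruct Rle_dec; lra. }
  specialize (Hs s Hs1).
  pose proof (HLf s t0 ltac:(lra) ltac:(lra)). rewrite (Rabs_right (s - t0)) in H by lra.
  pose proof (Rle_abs (f s - f t0)).
  assert (s - t0 <= (f t1 - f t0) / (2 * (L + 1))) by (unfold s; pose proof (Rmin_r ((t1 - t0) / 2) ((f t1 - f t0) / (2 * (L + 1)))); lra).
  assert (L * (s - t0) <= L * ((f t1 - f t0) / (2 * (L + 1)))) by (apply Rmult_le_compat_l; lra).
  assert (L * ((f t1 - f t0) / (2 * (L + 1))) <= (f t1 - f t0) / 2).
  { unfold Rdiv. apply Rle_trans with ((L + 1) * ((f t1 - f t0) * / (2 * (L + 1)))).
    apply Rmult_le_compat_r. apply Rmult_le_pos. lra. left; apply Rinv_0_lt_compat; lra. lra.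
    right; field; lra. }
  lra.
Qed.

Lemma gron V t0 t1 N C : t0 <= t1 -> null1 N -> Lip t0 t1 V -> V t0 <= 0 ->
  (forall t, t0 < t < t1 -> ~ N t -> exists d, derivable_pt_lim V t d /\ d <= C * V t) ->
  V t1 <= 0.
Proof.
  intros H01 HN HL H0 Hd.
  assert (HW : (fun s => exp (- C * s) * V s) t1 <= (fun s => exp (- C * s) * V s) t0).
  { apply (mono (fun s => exp (- C * s) * V s) t0 t1 N); auto.
    - apply Lip_mult; auto. apply (Lip_comp t0 t1 exp (fun s => - C * s)); auto.
      apply exp_locLip. apply Lip_scal. apply Lip_id.
    - intros t Ht HNt. destruct (Hd t Ht HNt) as [d [Hd1 Hd2]].
      eexists. split. apply D_mult. apply (D_comp exp (fun s => - C * s)). apply D_scal. apply D_id.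
      apply D_exp. exact Hd1. cbv beta.
      pose proof (exp_pos (- C * t)). nra. }
  cbv beta in HW. pose proof (exp_pos (- C * t0)). pose proof (exp_pos (- C * t1)).
  assert (exp (- C * t1) * V t1 <= 0) by nra.
  destruct (Rle_dec (V t1) 0); auto. nra.
Qed.

Lemma decay y T0 N A δ : 0 < δ -> null1 N -> (forall b, T0 <= b -> Lip T0 b y) ->
  (forall t, T0 < t -> ~ N t -> exists d, derivable_pt_lim y t d /\ d <= A - δ * y t) ->
  forall η, 0 < η -> exists T, forall t, T <= t -> y t <= A / δ + η.
Proof.
  intros Hδ HN HL Hd η Hη.
  set (W := fun s => exp (2 * δ * s) * sqp (y s - A / δ)).
  assert (HW : forall t, T0 <= t -> W t <= W T0).
  { intros t Ht. apply (mono W T0 t N); auto.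
    - unfold W. apply Lip_mult; auto. apply (Lip_comp T0 t exp (fun s => 2 * δ * s)); auto.
      apply exp_locLip. apply Lip_scal. apply Lip_id.
      apply (Lip_comp T0 t sqp (fun s => y s - A / δ)); auto. apply sqp_locLip.
      apply Lip_minus. apply HL; auto. apply Lip_const.
    - intros s Hs HNs. destruct (Hd s ltac:(lra) HNs) as [d [Hd1 Hd2]].
      eexists. split. unfold W. apply D_mult. apply (D_comp exp (fun s => 2 * δ * s)). apply D_scal. apply D_id.
      apply D_exp. apply (D_comp sqp (fun s => y s - A / δ)). apply D_minus. exact Hd1. apply D_const.
      apply D_sqp. cbv beta.
      pose proof (exp_pos (2 * δ * s)).
      pose proof (Pp_ge0 (y s - A / δ)). pose proof (Pp_mul (y s - A / δ)).
      assert (Hk : 2 * Pp (y s - A / δ) * (d - 0) <= - 2 * δ * sqp (y s - A / δ)).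
      { assert (A - δ * y s = - δ * (y s - A / δ)) by (field; lra). nra. }
      assert (H3 : exp (2 * δ * s) * (2 * δ * 1) * sqp (y s - A / δ) = - (exp (2 * δ * s) * (- 2 * δ * sqp (y s - A / δ)))) by ring.
      rewrite H3. nra. }
  set (K0 := W T0).
  assert (HK0 : 0 <= K0). { unfold K0, W. pose proof (exp_pos (2*δ*T0)). pose proof (sqp_ge0 (y T0 - A/δ)). nra. }
  exists (Rmax (Rmax T0 1) (K0 / (2 * δ * (η * η)) + 1)). intros t Ht.
  assert (Ht0 : T0 <= t) by (pose proof (Rmax_l (Rmax T0 1) (K0 / (2 * δ * (η * η)) + 1)); pose proof (Rmax_l T0 1); lra).
  assert (Ht1 : 1 <= t) by (pose proof (Rmax_l (Rmax T0 1) (K0 / (2 * δ * (η * η)) + 1)); pose proof (Rmax_r T0 1); lra).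
  assert (Ht2 : K0 / (2 * δ * (η * η)) + 1 <= t) by apply (Rle_trans _ _ _ (Rmax_r _ _) Ht).
  specialize (HW t Ht0). fold K0 in HW. unfold W in HW.
  apply Rnot_gt_le. intro Hgt.
  assert (Hsq : η * η < sqp (y t - A / δ)).
  { unfold sqp, Pp. rewrite Rmax_left by lra. nra. }
  assert (He : 2 * δ * t < exp (2 * δ * t)).
  { pose proof (exp_ineq1 (2 * δ * t) ltac:(nra)). lra. }
  assert (HK : K0 < 2 * δ * t * (η * η)).
  { assert (K0 / (2 * δ * (η * η)) < t) by lra.
    assert (Hp : 0 < 2 * δ * (η * η)) by (apply Rmult_lt_0_compat; nra). apply (Rmult_lt_compat_r (2 * δ * (η * η)) _ _ Hp) in H.
    unfold Rdiv in H. rewrite Rmult_assoc, Rinv_l in H by nra. nra. }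
  pose proof (exp_pos (2 * δ * t)).
  assert (2 * δ * t * (η * η) <= exp (2 * δ * t) * sqp (y t - A / δ)) by nra.
  lra.
Qed.

Definition lin (aE aM aF aS : R) (y : vec4) := aE * cE y + aM * cM y + aF * cF y + aS * cMs y.

Lemma sum4_split (w : nat -> R) (p : nat -> vec4) aE aM aF aS n :
  sum_f_R0 (fun i => w i * lin aE aM aF aS (p i)) n =
  aE * sum_f_R0 (fun i => w i * cE (p i)) n + aM * sum_f_R0 (fun i => w i * cM (p i)) n +
  aF * sum_f_R0 (fun i => w i * cF (p i)) n + aS * sum_f_R0 (fun i => w i * cMs (p i)) n.
Proof. induction n; simpl. unfold lin; ring. rewrite IHn. unfold lin; ring. Qed.

Lemma sum_wle (w : nat -> R) (f : nat -> R) c n :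
  (forall i, (i <= n)%nat -> 0 <= w i /\ f i <= c) ->
  sum_f_R0 (fun i => w i * f i) n <= c * sum_f_R0 w n.
Proof. induction n; intros H; simpl.
  destruct (H 0%nat ltac:(lia)). nra.
  assert (IH := IHn (fun i Hi => H i ltac:(lia))). destruct (H (S n) ltac:(lia)). nra. Qed.

Lemma lin_conv aE aM aF aS c S x : (forall y, S y -> lin aE aM aF aS y <= c) -> conv S x ->
  lin aE aM aF aS x <= c.
Proof. intros HS [n [w [p [Hwp [Hw1 [HE [HM [HF HMs]]]]]]]].
  assert (lin aE aM aF aS x = sum_f_R0 (fun i => w i * lin aE aM aF aS (p i)) n).
  { rewrite sum4_split. unfold lin. rewrite HE, HM, HF, HMs. ring. }
  rewrite H. eapply Rle_trans. apply sum_wle. intros i Hi. destruct (Hwp i Hi). split; auto.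
  rewrite Hw1. lra. Qed.

Lemma comp_le_vnorm v : Rabs (cE v) <= vnorm v /\ Rabs (cM v) <= vnorm v /\
  Rabs (cF v) <= vnorm v /\ Rabs (cMs v) <= vnorm v.
Proof. unfold vnorm.
  assert (G : forall x s, 0 <= s -> Rabs x <= sqrt (x ^ 2 + s)).
  { intros x s Hs. rewrite <- sqrt_Rsqr_abs. apply sqrt_le_1_alt. unfold Rsqr. simpl. lra. }
  pose proof (pow2_ge_0 (cE v)). pose proof (pow2_ge_0 (cM v)).
  pose proof (pow2_ge_0 (cF v)). pose proof (pow2_ge_0 (cMs v)).
  repeat split.
  - replace (cE v ^ 2 + cM v ^ 2 + cF v ^ 2 + cMs v ^ 2) with (cE v ^ 2 + (cM v ^ 2 + cF v ^ 2 + cMs v ^ 2)) by ring. apply G; lra.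
  - replace (cE v ^ 2 + cM v ^ 2 + cF v ^ 2 + cMs v ^ 2) with (cM v ^ 2 + (cE v ^ 2 + cF v ^ 2 + cMs v ^ 2)) by ring. apply G; lra.
  - replace (cE v ^ 2 + cM v ^ 2 + cF v ^ 2 + cMs v ^ 2) with (cF v ^ 2 + (cM v ^ 2 + cE v ^ 2 + cMs v ^ 2)) by ring. apply G; lra.
  - replace (cE v ^ 2 + cM v ^ 2 + cF v ^ 2 + cMs v ^ 2) with (cMs v ^ 2 + (cM v ^ 2 + cF v ^ 2 + cE v ^ 2)) by ring. apply G; lra.
Qed.

Lemma vnorm_le_sum v : vnorm v <= Rabs (cE v) + Rabs (cM v) + Rabs (cF v) + Rabs (cMs v).
Proof. unfold vnorm. set (s := Rabs (cE v) + Rabs (cM v) + Rabs (cF v) + Rabs (cMs v)).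
  assert (0 <= s) by (unfold s; pose proof (Rabs_pos (cE v)); pose proof (Rabs_pos (cM v));
     pose proof (Rabs_pos (cF v)); pose proof (Rabs_pos (cMs v)); lra).
  rewrite <- (sqrt_Rsqr s H). apply sqrt_le_1_alt. unfold Rsqr, s.
  rewrite <- !Rsqr_abs_pow2 || idtac.
  assert (forall x, x ^ 2 = Rabs x * Rabs x) by (intros; rewrite <- Rabs_mult; rewrite Rabs_right; [ring|nra]).
  rewrite !H0. pose proof (Rabs_pos (cE v)); pose proof (Rabs_pos (cM v));
     pose proof (Rabs_pos (cF v)); pose proof (Rabs_pos (cMs v)). nra. Qed.

Lemma lin_closure aE aM aF aS c S x : (forall y, S y -> lin aE aM aF aS y <= c) ->
  closure4 (conv S) x -> lin aE aM aF aS x <= c.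
Proof. intros HS Hcl. apply Rnot_gt_le. intro Hgt.
  set (A := Rabs aE + Rabs aM + Rabs aF + Rabs aS + 1).
  assert (HA : 0 < A) by (unfold A; pose proof (Rabs_pos aE); pose proof (Rabs_pos aM);
     pose proof (Rabs_pos aF); pose proof (Rabs_pos aS); lra).
  destruct (Hcl ((lin aE aM aF aS x - c) / A) ltac:(apply Rdiv_lt_0_compat; lra)) as [y [Hy Hxy]].
  pose proof (lin_conv _ _ _ _ _ _ _ HS Hy) as Hly.
  destruct (comp_le_vnorm (vsub x y)) as [h1 [h2 [h3 h4]]]. simpl in h1, h2, h3, h4.
  assert (lin aE aM aF aS x - lin aE aM aF aS y <= A * vnorm (vsub x y)).
  { unfold lin.
    replace (aE * cE x + aM * cM x + aF * cF x + aS * cMs x - (aE * cE y + aM * cM y + aF * cF y + aS * cMs y))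
     with (aE * (cE x - cE y) + aM * (cM x - cM y) + aF * (cF x - cF y) + aS * (cMs x - cMs y)) by ring.
    assert (G : forall a u, Rabs u <= vnorm (vsub x y) -> a * u <= Rabs a * vnorm (vsub x y)).
    { intros a u Hu. apply Rle_trans with (Rabs (a * u)). apply Rle_abs. rewrite Rabs_mult.
      apply Rmult_le_compat_l. apply Rabs_pos. auto. }
    pose proof (G aE _ h1). pose proof (G aM _ h2). pose proof (G aF _ h3). pose proof (G aS _ h4).
    assert (0 <= vnorm (vsub x y)) by (unfold vnorm; apply sqrt_pos).
    unfold A. nra. }
  assert (A * vnorm (vsub x y) < A * ((lin aE aM aF aS x - c) / A)) by (apply Rmult_lt_compat_l; auto).
  replace (A * ((lin aE aM aF aS x - c) / A)) with (lin aE aM aF aS x - c) in H0 by (field; lra).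
  lra. Qed.

Lemma null4_empty : null4 (fun _ => False).
Proof. intros eps Heps. exists (fun _ => mkv 0 0 0 0), (fun _ => mkv 0 0 0 0).
  split. intros k; simpl; lra. split. intros z []. intros n.
  assert (forall n, sum_f_R0 (fun k => box_vol (mkv 0 0 0 0) (mkv 0 0 0 0)) n = 0).
  { induction n0; simpl; unfold box_vol; simpl. ring. unfold box_vol in IHn0; simpl in IHn0. rewrite IHn0. ring. }
  rewrite H. lra. Qed.

Lemma filippov_lin X z v aE aM aF aS c e0 C : filippov_set X z v -> 0 < e0 ->
  (forall eps, 0 < eps <= e0 -> forall w, vnorm (vsub w z) <= eps -> in_D' w ->
      lin aE aM aF aS (X w) <= c + C * eps) ->
  lin aE aM aF aS v <= c.
Proof. intros Hf He0 Hb.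
  assert (Heps : forall eps, 0 < eps <= e0 -> lin aE aM aF aS v <= c + C * eps).
  { intros eps Heps. eapply lin_closure; [|exact (Hf eps ltac:(lra) _ null4_empty)].
    intros y [w [Hw1 [Hw2 [_ ->]]]]. apply Hb; auto. }
  apply Rnot_gt_le. intro Hgt.
  set (eps := Rmin e0 ((lin aE aM aF aS v - c) / (2 * (Rabs C + 1)))).
  assert (Hp : 0 < (lin aE aM aF aS v - c) / (2 * (Rabs C + 1))).
  { apply Rdiv_lt_0_compat. lra. pose proof (Rabs_pos C). lra. }
  assert (He : 0 < eps <= e0). { unfold eps. split. apply Rmin_glb_lt; lra. apply Rmin_l. }
  specialize (Heps eps He).
  assert (eps <= (lin aE aM aF aS v - c) / (2 * (Rabs C + 1))) by (unfold eps; apply Rmin_r).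
  assert (C * eps <= Rabs C * eps) by (apply Rmult_le_compat_r; [lra | apply Rle_abs]).
  assert (Rabs C * eps <= (Rabs C + 1) * ((lin aE aM aF aS v - c) / (2 * (Rabs C + 1)))).
  { apply Rmult_le_compat. apply Rabs_pos. lra. lra. auto. }
  replace ((Rabs C + 1) * ((lin aE aM aF aS v - c) / (2 * (Rabs C + 1)))) with ((lin aE aM aF aS v - c) / 2) in H1
    by (field; pose proof (Rabs_pos C); lra).
  lra. Qed.

Lemma absmul c x e : Rabs x <= e -> c * x <= Rabs c * e.
Proof. intros H. apply Rle_trans with (Rabs (c * x)). apply Rle_abs. rewrite Rabs_mult.
  apply Rmult_le_compat_l. apply Rabs_pos. auto. Qed.

Lemma diffs w z eps : vnorm (vsub w z) <= eps ->
  Rabs (cE w - cE z) <= eps /\ Rabs (cM w - cM z) <= eps /\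
  Rabs (cF w - cF z) <= eps /\ Rabs (cMs w - cMs z) <= eps.
Proof. intros H. destruct (comp_le_vnorm (vsub w z)) as [h1 [h2 [h3 h4]]]. simpl in *.
  repeat split; lra. Qed.

Lemma lin_E y : lin 1 0 0 0 y = cE y. Proof. unfold lin; ring. Qed.
Lemma lin_E' y : lin (-1) 0 0 0 y = - cE y. Proof. unfold lin; ring. Qed.
Lemma lin_M y : lin 0 1 0 0 y = cM y. Proof. unfold lin; ring. Qed.
Lemma lin_M' y : lin 0 (-1) 0 0 y = - cM y. Proof. unfold lin; ring. Qed.
Lemma lin_F y : lin 0 0 1 0 y = cF y. Proof. unfold lin; ring. Qed.
Lemma lin_F' y : lin 0 0 (-1) 0 y = - cF y. Proof. unfold lin; ring. Qed.
Lemma lin_S y : lin 0 0 0 1 y = cMs y. Proof. unfold lin; ring. Qed.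
Lemma lin_S' y : lin 0 0 0 (-1) y = - cMs y. Proof. unfold lin; ring. Qed.

Lemma fil_eq X z v (pr : vec4 -> R) aE aM aF aS C :
  (forall y, lin aE aM aF aS y = pr y) -> (forall y, lin (-aE) (-aM) (-aF) (-aS) y = - pr y) ->
  filippov_set X z v ->
  (forall eps, 0 < eps <= 1 -> forall w, vnorm (vsub w z) <= eps -> in_D' w ->
      Rabs (pr (X w) - pr (X z)) <= C * eps) ->
  pr v = pr (X z).
Proof. intros H1 H2 Hf Hb. apply Rle_antisym.
  - rewrite <- H1. apply (filippov_lin X z v _ _ _ _ _ 1 C Hf ltac:(lra)).
    intros eps He w Hw HD. rewrite H1. specialize (Hb eps He w Hw HD).
    pose proof (Rle_abs (pr (X w) - pr (X z))). lra.
  - assert (- pr v <= - pr (X z)); [|lra].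
    rewrite <- H2. apply (filippov_lin X z v _ _ _ _ _ 1 C Hf ltac:(lra)).
    intros eps He w Hw HD. rewrite H2. specialize (Hb eps He w Hw HD).
    rewrite <- Rabs_Ropp in Hb. pose proof (Rle_abs (- (pr (X w) - pr (X z)))). lra.
Qed.


Lemma Xcl_E bE nE dE dM dF ds K nu g la w :
  cE (Xcl bE nE dE dM dF ds K nu g la w) = bE * cF w * (1 - cE w / K) - (nE + dE) * cE w.
Proof. reflexivity. Qed.
Lemma Xcl_M bE nE dE dM dF ds K nu g la w :
  cM (Xcl bE nE dE dM dF ds K nu g la w) = (1 - nu) * nE * cE w - dM * cM w.
Proof. reflexivity. Qed.
Lemma Xcl_F bE nE dE dM dF ds K nu g la w :
  cF (Xcl bE nE dE dM dF ds K nu g la w) = nu * nE * cE w * (cM w / (cM w + g * cMs w)) - dF * cF w.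
Proof. reflexivity. Qed.
Lemma Xcl_S bE nE dE dM dF ds K nu g la w :
  cMs (Xcl bE nE dE dM dF ds K nu g la w) = la * cM w - ds * cMs w.
Proof. reflexivity. Qed.

Lemma abs_term c x e : Rabs x <= e -> Rabs (c * x) <= Rabs c * e.
Proof. intros. rewrite Rabs_mult. apply Rmult_le_compat_l; auto. apply Rabs_pos. Qed.

Lemma abs4 c1 c2 c3 c4 x1 x2 x3 x4 e : Rabs x1 <= e -> Rabs x2 <= e -> Rabs x3 <= e -> Rabs x4 <= e ->
  Rabs (c1 * x1 + c2 * x2 + c3 * x3 + c4 * x4) <= (Rabs c1 + Rabs c2 + Rabs c3 + Rabs c4) * e.
Proof. intros. pose proof (abs_term c1 x1 e H). pose proof (abs_term c2 x2 e H0).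
  pose proof (abs_term c3 x3 e H1). pose proof (abs_term c4 x4 e H2).
  pose proof (Rabs_triang (c1 * x1 + c2 * x2 + c3 * x3) (c4 * x4)).
  pose proof (Rabs_triang (c1 * x1 + c2 * x2) (c3 * x3)).
  pose proof (Rabs_triang (c1 * x1) (c2 * x2)). lra. Qed.

Lemma abs2 c1 c2 x1 x2 e : Rabs x1 <= e -> Rabs x2 <= e ->
  Rabs (c1 * x1 + c2 * x2) <= (Rabs c1 + Rabs c2) * e.
Proof. intros. pose proof (abs_term c1 x1 e H). pose proof (abs_term c2 x2 e H0).
  pose proof (Rabs_triang (c1 * x1) (c2 * x2)). lra. Qed.

Lemma FA_E bE nE dE dM dF ds K nu g la z v : 0 < K ->
  filippov_set (Xcl bE nE dE dM dF ds K nu g la) z v ->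
  cE v = bE * cF z * (1 - cE z / K) - (nE + dE) * cE z.
Proof. intros HK Hf. rewrite <- (Xcl_E bE nE dE dM dF ds K nu g la z).
  apply (fil_eq _ z v cE 1 0 0 0 (Rabs (bE * (1 - cE z / K)) + Rabs (- (bE * cF z / K)) + Rabs (- (bE / K)) + Rabs (- (nE + dE))));
    [ intros; unfold lin; ring | intros; unfold lin; ring | auto |].
  intros eps He w Hw HD. destruct (diffs w z eps Hw) as [h1 [h2 [h3 h4]]].
  rewrite !Xcl_E.
  set (eE := cE w - cE z). set (eF := cF w - cF z).
  assert (Hp : Rabs (eF * eE) <= eps).
  { rewrite Rabs_mult. apply Rle_trans with (eps * eps). apply Rmult_le_compat; auto; apply Rabs_pos. nra. }
  replace (bE * cF w * (1 - cE w / K) - (nE + dE) * cE w - (bE * cF z * (1 - cE z / K) - (nE + dE) * cE z))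
    with ((bE * (1 - cE z / K)) * eF + (- (bE * cF z / K)) * eE + (- (bE / K)) * (eF * eE) + (- (nE + dE)) * eE)
    by (unfold eE, eF; field; lra).
  apply abs4; auto.
Qed.

Lemma FA_M bE nE dE dM dF ds K nu g la z v :
  filippov_set (Xcl bE nE dE dM dF ds K nu g la) z v ->
  cM v = (1 - nu) * nE * cE z - dM * cM z.
Proof. intros Hf. rewrite <- (Xcl_M bE nE dE dM dF ds K nu g la z).
  apply (fil_eq _ z v cM 0 1 0 0 (Rabs ((1 - nu) * nE) + Rabs (- dM)));
    [ intros; unfold lin; ring | intros; unfold lin; ring | auto |].
  intros eps He w Hw HD. destruct (diffs w z eps Hw) as [h1 [h2 [h3 h4]]].
  rewrite !Xcl_M.
  replace ((1 - nu) * nE * cE w - dM * cM w - ((1 - nu) * nE * cE z - dM * cM z))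
    with (((1 - nu) * nE) * (cE w - cE z) + (- dM) * (cM w - cM z)) by ring.
  apply abs2; auto.
Qed.

Lemma FA_S bE nE dE dM dF ds K nu g la z v :
  filippov_set (Xcl bE nE dE dM dF ds K nu g la) z v ->
  cMs v = la * cM z - ds * cMs z.
Proof. intros Hf. rewrite <- (Xcl_S bE nE dE dM dF ds K nu g la z).
  apply (fil_eq _ z v cMs 0 0 0 1 (Rabs la + Rabs (- ds)));
    [ intros; unfold lin; ring | intros; unfold lin; ring | auto |].
  intros eps He w Hw HD. destruct (diffs w z eps Hw) as [h1 [h2 [h3 h4]]].
  rewrite !Xcl_S.
  replace (la * cM w - ds * cMs w - (la * cM z - ds * cMs z))
    with (la * (cM w - cM z) + (- ds) * (cMs w - cMs z)) by ring.
  apply abs2; auto.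
Qed.

Lemma q_range g M Ms : 0 < g -> 0 <= M -> 0 <= Ms -> 0 <= M / (M + g * Ms) <= 1.
Proof. intros. destruct (Req_dec (M + g * Ms) 0) as [H2|H2].
  rewrite H2. unfold Rdiv. rewrite Rinv_0. lra.
  split. apply Rmult_le_pos; auto. left; apply Rinv_0_lt_compat; nra.
  unfold Rdiv. apply Rle_trans with ((M + g * Ms) * / (M + g * Ms)).
  apply Rmult_le_compat_r. left; apply Rinv_0_lt_compat; nra. nra. rewrite Rinv_r; lra. Qed.

Lemma FA_Flow bE nE dE dM dF ds K nu g la z v : 0 < g -> 0 < nu -> 0 < nE ->
  filippov_set (Xcl bE nE dE dM dF ds K nu g la) z v ->
  - dF * cF z <= cF v.
Proof. intros Hg Hnu HnE Hf.
  assert (- cF v <= dF * cF z); [|lra].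
  rewrite <- lin_F'. apply (filippov_lin _ z v _ _ _ _ _ 1 (Rabs dF) Hf ltac:(lra)).
  intros eps He w Hw [HE [HM [HF HS]]]. rewrite lin_F', Xcl_F.
  destruct (diffs w z eps Hw) as [h1 [h2 [h3 h4]]].
  pose proof (q_range g (cM w) (cMs w) Hg HM HS).
  assert (0 <= nu * nE * cE w * (cM w / (cM w + g * cMs w))) by (apply Rmult_le_pos; [|lra]; apply Rmult_le_pos; [nra|lra]).
  pose proof (absmul dF (cF w - cF z) eps h3). lra.
Qed.

Lemma FA_Fup bE nE dE dM dF ds K nu g la z v : 0 < g -> 0 < nu -> 0 < nE ->
  filippov_set (Xcl bE nE dE dM dF ds K nu g la) z v ->
  cF v <= nu * nE * cE z - dF * cF z.
Proof. intros Hg Hnu HnE Hf.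
  rewrite <- lin_F. apply (filippov_lin _ z v _ _ _ _ _ 1 (Rabs (nu * nE) + Rabs dF) Hf ltac:(lra)).
  intros eps He w Hw [HE [HM [HF HS]]]. rewrite lin_F, Xcl_F.
  destruct (diffs w z eps Hw) as [h1 [h2 [h3 h4]]].
  pose proof (q_range g (cM w) (cMs w) Hg HM HS).
  assert (nu * nE * cE w * (cM w / (cM w + g * cMs w)) <= nu * nE * cE w).
  { rewrite <- (Rmult_1_r (nu * nE * cE w)) at 2. apply Rmult_le_compat_l. apply Rmult_le_pos; [nra|lra]. lra. }
  pose proof (absmul (- dF) (cF w - cF z) eps h3). rewrite Rabs_Ropp in H1.
  pose proof (absmul (nu * nE) (cE w - cE z) eps h1).
  lra.
Qed.

Lemma absle x e : Rabs x <= e -> - e <= x <= e.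
Proof. unfold Rabs; destruct Rcase_abs; intros; lra. Qed.

Lemma q_lip g Mw Msw Mz Msz eps : 0 < g -> 0 <= Mz -> 0 <= Msz -> 0 < Mz + g * Msz ->
  Rabs (Mw - Mz) <= eps -> Rabs (Msw - Msz) <= eps -> eps <= (Mz + g * Msz) / (2 * (1 + g)) ->
  Rabs (Mw / (Mw + g * Msw) - Mz / (Mz + g * Msz)) <=
    (2 * g * (Msz + Mz) / ((Mz + g * Msz) * (Mz + g * Msz))) * eps.
Proof. intros Hg HM HS Hs h2 h4 He.
  assert (Hsw : (Mz + g * Msz) / 2 <= Mw + g * Msw).
  { apply absle in h2. apply absle in h4.
    assert ((1 + g) * eps <= (Mz + g * Msz) / 2).
    { apply (Rmult_le_compat_l (1 + g)) in He; [|lra].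
      replace ((1 + g) * ((Mz + g * Msz) / (2 * (1 + g)))) with ((Mz + g * Msz) / 2) in He by (field; lra). auto. }
    nra. }
  assert (Hswp : 0 < Mw + g * Msw) by lra.
  replace (Mw / (Mw + g * Msw) - Mz / (Mz + g * Msz)) with
     ((g * ((Mw - Mz) * Msz - Mz * (Msw - Msz))) / ((Mw + g * Msw) * (Mz + g * Msz)))
    by (field; split; lra).
  set (sz := Mz + g * Msz) in *. set (sw := Mw + g * Msw) in *.
  unfold Rdiv. rewrite Rabs_mult. rewrite (Rabs_right (/ (sw * sz))) by (left; apply Rinv_0_lt_compat; nra).
  assert (Hn : Rabs (g * ((Mw - Mz) * Msz - Mz * (Msw - Msz))) <= g * (Msz + Mz) * eps).
  { rewrite Rabs_mult, (Rabs_right g) by lra. rewrite Rmult_assoc. apply Rmult_le_compat_l; [lra|].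
    eapply Rle_trans. apply Rabs_triang. rewrite Rabs_Ropp, !Rabs_mult, (Rabs_right Msz), (Rabs_right Mz) by lra.
    nra. }
  assert (Hi : / (sw * sz) <= 2 * / (sz * sz)).
  { replace (2 * / (sz * sz)) with (/ ((sz / 2) * sz)) by (field; lra).
    apply Rinv_le_contravar. nra. apply Rmult_le_compat_r; lra. }
  apply Rle_trans with (g * (Msz + Mz) * eps * (2 * / (sz * sz))).
  apply Rmult_le_compat; auto. apply Rabs_pos. left; apply Rinv_0_lt_compat; nra.
  right. field. lra.
Qed.

Lemma FA_Fpos bE nE dE dM dF ds K nu g la z v : 0 < g -> 0 < nu -> 0 < nE -> in_D' z ->
  0 < cM z + g * cMs z ->
  filippov_set (Xcl bE nE dE dM dF ds K nu g la) z v ->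
  cF v <= nu * nE * cE z * (cM z / (cM z + g * cMs z)) - dF * cF z.
Proof. intros Hg Hnu HnE [HEz [HMz [HFz HSz]]] Hs Hf.
  set (K1 := 2 * g * (cMs z + cM z) / ((cM z + g * cMs z) * (cM z + g * cMs z))).
  rewrite <- lin_F.
  apply (filippov_lin _ z v _ _ _ _ _ ((cM z + g * cMs z) / (2 * (1 + g)))
     (nu * nE * (1 + cE z * K1) + Rabs dF) Hf ltac:(apply Rdiv_lt_0_compat; lra)).
  intros eps He w Hw [HE [HM [HF HS]]]. rewrite lin_F, Xcl_F.
  destruct (diffs w z eps Hw) as [h1 [h2 [h3 h4]]].
  pose proof (q_range g (cM w) (cMs w) Hg HM HS) as Hqw.
  pose proof (q_lip g (cM w) (cMs w) (cM z) (cMs z) eps Hg HMz HSz Hs h2 h4 (proj2 He)) as Hq.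
  fold K1 in Hq.
  set (qw := cM w / (cM w + g * cMs w)) in *. set (qz := cM z / (cM z + g * cMs z)) in *.
  assert (H1 : cE w * qw - cE z * qz <= eps + cE z * (K1 * eps)).
  { replace (cE w * qw - cE z * qz) with ((cE w - cE z) * qw + cE z * (qw - qz)) by ring.
    apply absle in h1. pose proof (Rle_abs (qw - qz)).
    assert ((cE w - cE z) * qw <= eps) by nra.
    assert (cE z * (qw - qz) <= cE z * (K1 * eps)) by (apply Rmult_le_compat_l; lra). lra. }
  pose proof (absmul (- dF) (cF w - cF z) eps h3). rewrite Rabs_Ropp in H.
  assert (nu * nE * (cE w * qw - cE z * qz) <= nu * nE * (eps + cE z * (K1 * eps)))
    by (apply Rmult_le_compat_l; [nra|lra]).
  nra.
Qed.

Lemma Rdiv_le_0_compat a b : 0 <= a -> 0 < b -> 0 <= a / b.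
Proof. intros. unfold Rdiv. apply Rmult_le_pos; auto. left; apply Rinv_0_lt_compat; auto. Qed.

Lemma Eq_bound E M S g k c dM : 0 <= E -> 0 <= M -> 0 <= S -> 0 < g -> 0 < k -> 0 < c -> 0 < dM ->
  0 < M + g * S ->
  E * (M / (M + g * S) - k / (k + g)) <= Pp (c * E - dM * M) / c + dM * g / (c * (k + g)) * Pp (M - k * S).
Proof. intros HE HM HS Hg Hk Hc HdM Hs.
  assert (Hid : M / (M + g * S) - k / (k + g) = g * (M - k * S) / ((M + g * S) * (k + g)))
    by (field; lra).
  pose proof (Pp_ge0 (c * E - dM * M)) as P3. pose proof (Pp_ge (c * E - dM * M)) as P3'.
  pose proof (Pp_ge0 (M - k * S)) as P2. pose proof (Pp_ge (M - k * S)) as P2'.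
  assert (0 <= Pp (c * E - dM * M) / c) by (apply Rdiv_le_0_compat; lra).
  assert (0 <= dM * g / (c * (k + g)) * Pp (M - k * S)).
  { apply Rmult_le_pos; auto. apply Rdiv_le_0_compat; nra. }
  destruct (Rle_dec (M - k * S) 0) as [Hn|Hp].
  - rewrite Hid. assert (g * (M - k * S) / ((M + g * S) * (k + g)) <= 0).
    { unfold Rdiv. assert (0 < / ((M + g * S) * (k + g))) by (apply Rinv_0_lt_compat; nra).
      assert (g * (M - k * S) <= 0) by nra. nra. }
    nra.
  - assert (HMp : 0 < M) by nra.
    assert (Hq1 : M / (M + g * S) <= 1).
    { apply (Rmult_le_reg_r (M + g * S)); auto. unfold Rdiv. rewrite Rmult_assoc, Rinv_l by lra. nra. }
    assert (Hkq : 0 <= k / (k + g)) by (apply Rdiv_le_0_compat; lra).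
    assert (Hd1 : M / (M + g * S) - k / (k + g) <= 1) by lra.
    assert (Hd0 : 0 <= M / (M + g * S) - k / (k + g)).
    { rewrite Hid. apply Rdiv_le_0_compat; nra. }
    assert (Hd2 : M * (M / (M + g * S) - k / (k + g)) <= g * (M - k * S) / (k + g)).
    { rewrite Hid. unfold Rdiv. rewrite Rinv_mult.
      assert (M * / (M + g * S) <= 1).
      { apply (Rmult_le_reg_r (M + g * S)); auto. rewrite Rmult_assoc, Rinv_l by lra. nra. }
      assert (0 <= g * (M - k * S) * / (k + g)) by (apply Rmult_le_pos; [nra | left; apply Rinv_0_lt_compat; lra]).
      replace (M * (g * (M - k * S) * (/ (M + g * S) * / (k + g)))) with
        ((M * / (M + g * S)) * (g * (M - k * S) * / (k + g))) by ring. nra. }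
    assert (HE' : E = (c * E - dM * M) / c + dM * M / c) by (field; lra).
    assert (HEle : E <= Pp (c * E - dM * M) / c + dM * M / c).
    { rewrite HE' at 1. apply Rplus_le_compat_r. unfold Rdiv. apply Rmult_le_compat_r.
      left; apply Rinv_0_lt_compat; lra. auto. }
    apply Rle_trans with ((Pp (c * E - dM * M) / c + dM * M / c) * (M / (M + g * S) - k / (k + g))).
    apply Rmult_le_compat_r; auto.
    rewrite Rmult_plus_distr_r.
    apply Rplus_le_compat. rewrite <- (Rmult_1_r (Pp (c * E - dM * M) / c)) at 2. apply Rmult_le_compat_l; auto.
    replace (dM * M / c * (M / (M + g * S) - k / (k + g))) with (dM / c * (M * (M / (M + g * S) - k / (k + g))))
      by (field; lra).
    apply Rle_trans with (dM / c * (g * (M - k * S) / (k + g))).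
    apply Rmult_le_compat_l; auto. apply Rdiv_le_0_compat; lra.
    replace (dM * g / (c * (k + g)) * Pp (M - k * S)) with (dM / c * (g * Pp (M - k * S) / (k + g))) by (field; lra).
    apply Rmult_le_compat_l. apply Rdiv_le_0_compat; lra.
    unfold Rdiv. apply Rmult_le_compat_r. left; apply Rinv_0_lt_compat; lra. nra.
Qed.

Lemma Eq_bound0 E M g k c dM : 0 <= E -> M = 0 -> 0 < g -> 0 < k -> 0 < c ->
  E * (1 - k / (k + g)) <= Pp (c * E - dM * M) / c.
Proof. intros HE HM Hg Hk Hc. subst M.
  assert (0 <= k / (k + g) <= 1). { split. apply Rdiv_le_0_compat; lra.
    apply (Rmult_le_reg_r (k + g)). lra. unfold Rdiv. rewrite Rmult_assoc, Rinv_l by lra. lra. }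
  pose proof (Pp_ge (c * E - dM * 0)).
  assert (E <= Pp (c * E - dM * 0) / c).
  { apply (Rmult_le_reg_r c); auto. unfold Rdiv. rewrite Rmult_assoc, Rinv_l by lra. lra. }
  nra.
Qed.

Definition Ccore bE nE dM nu g k := 2 * (bE * nu * nE / ((1 - nu) * nE) +
   bE * nu * nE * dM * g / ((1 - nu) * nE * (k + g)) + (1 - nu) * nE + 1).

Lemma core bE nE dE dM dF ds K nu g la k E M F S vE vM vF vS :
  0 < bE -> 0 < nE -> 0 < dE -> 0 < dM -> 0 < dF -> 0 < ds -> 0 < K -> 0 < nu < 1 -> 0 < g ->
  0 < k -> ds <= k * la -> bE * nu * nE * k = dF * (nE + dE) * (k + g) ->
  0 <= E -> 0 <= M -> 0 <= F -> 0 <= S ->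
  vE = bE * F * (1 - E / K) - (nE + dE) * E ->
  vM = (1 - nu) * nE * E - dM * M ->
  vS = la * M - ds * S ->
  - dF * F <= vF -> vF <= nu * nE * E - dF * F ->
  (0 < M + g * S -> vF <= nu * nE * E * (M / (M + g * S)) - dF * F) ->
  2 * Pp (bE * F * (1 - E / K) - (nE + dE) * E) * (bE * vF * (1 - E / K) + bE * F * (- (vE / K)) - (nE + dE) * vE)
  + 2 * Pp (M - k * S) * (vM - k * vS)
  + 2 * Pp ((1 - nu) * nE * E - dM * M) * ((1 - nu) * nE * vE - dM * vM)
  <= Ccore bE nE dM nu g k * (sqp (bE * F * (1 - E / K) - (nE + dE) * E) + sqp (M - k * S)
        + sqp ((1 - nu) * nE * E - dM * M)).
Proof.
  intros HbE HnE HdE HdM HdF Hds HK Hnu Hg Hk Hkla Hid HE HM HF HS HvE HvM HvS Hlow Hup Hpos.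
  set (a := nE + dE) in *. set (c := (1 - nu) * nE) in *.
  set (g1 := bE * F * (1 - E / K) - a * E) in *.
  set (g2 := M - k * S). set (g3 := c * E - dM * M) in *.
  assert (Hc : 0 < c) by (unfold c; nra).
  set (k3 := bE * nu * nE / c). set (k2 := bE * nu * nE * dM * g / (c * (k + g))).
  assert (Hk3 : 0 <= k3) by (unfold k3; apply Rdiv_le_0_compat; [repeat apply Rmult_le_pos; lra|lra]).
  assert (Hk2 : 0 <= k2) by (unfold k2; apply Rdiv_le_0_compat; [|nra];
     repeat apply Rmult_le_pos; lra).
  set (R := k3 * Pp g3 + k2 * Pp g2).
  pose proof (Pp_ge0 g1) as P1. pose proof (Pp_ge0 g2) as P2. pose proof (Pp_ge0 g3) as P3.
  pose proof (Pp_ge g1) as Q1. pose proof (Pp_ge g2) as Q2. pose proof (Pp_ge g3) as Q3.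
  assert (HR : 0 <= R) by (unfold R; nra).
  assert (HaE : 0 <= dF * a * E) by (unfold a; apply Rmult_le_pos; [apply Rmult_le_pos|]; lra).
  assert (HbnQ : bE * nu * nE * (k / (k + g)) = dF * a).
  { unfold a. replace (bE * nu * nE * (k / (k + g))) with ((bE * nu * nE * k) / (k + g)) by (field; lra).
    rewrite Hid. unfold a. field. lra. }
  (* key: bE nu nE E q <= dF a E + R *)
  assert (HF1 : bE * (1 - E / K) * vF <= R - dF * g1).
  { destruct (Rle_dec (1 - E / K) 0) as [Hn|Hp].
    - assert (bE * (1 - E / K) * vF <= bE * (1 - E / K) * (- dF * F)).
      { apply Rmult_le_compat_neg_l. nra. auto. }
      assert (bE * (1 - E / K) * (- dF * F) = - dF * (g1 + a * E)) by (unfold g1; ring).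
      nra.
    - assert (HEK : 1 - E / K <= 1) by (assert (0 <= E / K) by (apply Rdiv_le_0_compat; lra); lra).
      assert (Hbnn : 0 < bE * nu * nE) by (apply Rmult_lt_0_compat; nra).
      assert (Hq : forall q, 0 <= q -> vF <= nu * nE * E * q - dF * F ->
                bE * nu * nE * E * (q - k / (k + g)) <= R ->
                bE * (1 - E / K) * vF <= R - dF * g1).
      { intros q Hq0 Hv Hb.
        assert (bE * (1 - E / K) * vF <= bE * (1 - E / K) * (nu * nE * E * q - dF * F))
          by (apply Rmult_le_compat_l; nra).
        assert (bE * (1 - E / K) * (nu * nE * E * q) <= bE * nu * nE * E * q).
        { assert (0 <= nu * nE * E * q) by (apply Rmult_le_pos; [|auto]; apply Rmult_le_pos; nra).
          replace (bE * nu * nE * E * q) with (bE * 1 * (nu * nE * E * q)) by ring.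
          apply Rmult_le_compat_r; auto. nra. }
        assert (bE * (1 - E / K) * (- dF * F) = - dF * (g1 + a * E)) by (unfold g1; ring).
        assert (bE * nu * nE * E * (k / (k + g)) = dF * a * E) by (rewrite <- HbnQ; ring).
        nra. }
      destruct (Rlt_dec 0 (M + g * S)) as [Hs|Hs].
      + apply (Hq (M / (M + g * S))). apply Rdiv_le_0_compat; lra. apply Hpos; auto.
        pose proof (Eq_bound E M S g k c dM HE HM HS Hg Hk Hc HdM Hs) as EB. fold g3 in EB.
        fold g2 in EB.
        unfold R, k3, k2.
        replace (bE * nu * nE * E * (M / (M + g * S) - k / (k + g))) with
          (bE * nu * nE * (E * (M / (M + g * S) - k / (k + g)))) by ring.
        apply Rle_trans with (bE * nu * nE * (Pp g3 / c + dM * g / (c * (k + g)) * Pp g2)).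
        apply Rmult_le_compat_l; lra. right. field. split; lra.
      + assert (HM0 : M = 0) by nra.
        apply (Hq 1). lra. lra.
        pose proof (Eq_bound0 E M g k c dM HE HM0 Hg Hk Hc) as EB. fold g3 in EB.
        unfold R, k3.
        replace (bE * nu * nE * E * (1 - k / (k + g))) with (bE * nu * nE * (E * (1 - k / (k + g)))) by ring.
        apply Rle_trans with (bE * nu * nE * (Pp g3 / c)). apply Rmult_le_compat_l; lra.
        assert (0 <= k2 * Pp g2) by nra. unfold Rdiv. nra. }
  assert (HD1 : bE * vF * (1 - E / K) + bE * F * (- (vE / K)) - a * vE <= R - (dF + bE * F / K + a) * g1).
  { rewrite HvE. fold g1. unfold Rdiv in *. nra. }
  assert (T1 : 2 * Pp g1 * (bE * vF * (1 - E / K) + bE * F * (- (vE / K)) - a * vE) <= 2 * Pp g1 * R).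
  { assert (0 <= dF + bE * F / K + a) by (assert (0 <= bE * F / K) by (apply Rdiv_le_0_compat; nra); unfold a; lra).
    pose proof (Pp_mul g1). pose proof (sqp_ge0 g1).
    assert (2 * Pp g1 * (bE * vF * (1 - E / K) + bE * F * (- (vE / K)) - a * vE) <= 2 * Pp g1 * (R - (dF + bE * F / K + a) * g1))
      by (apply Rmult_le_compat_l; lra).
    nra. }
  assert (T2 : 2 * Pp g2 * (vM - k * vS) <= sqp g2 + sqp g3).
  { assert (vM - k * vS <= g3 - ds * g2).
    { rewrite HvM, HvS. unfold g2. assert (0 <= (k * la - ds) * M) by (apply Rmult_le_pos; lra). nra. }
    assert (2 * Pp g2 * (vM - k * vS) <= 2 * Pp g2 * (g3 - ds * g2)) by (apply Rmult_le_compat_l; lra).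
    pose proof (Pp_mul g2) as E2. pose proof (sqp_ge0 g2) as S2.
    assert (0 <= ds * (Pp g2 * g2)) by (rewrite E2; apply Rmult_le_pos; lra).
    unfold sqp in *.
    assert (0 <= Pp g2 * (Pp g3 - g3)) by (apply Rmult_le_pos; lra).
    pose proof (Rle_0_sqr (Pp g2 - Pp g3)). unfold Rsqr in *.
    nra. }
  pose proof (Pp_mul g1) as E1. pose proof (Pp_mul g3) as E3.
  pose proof (sqp_ge0 g1) as S1. pose proof (sqp_ge0 g2) as S2. pose proof (sqp_ge0 g3) as S3.
  assert (T3 : 2 * Pp g3 * (c * vE - dM * vM) <= c * (sqp g1 + sqp g3)).
  { rewrite HvE, HvM.
    assert (2 * Pp g3 * (c * g1) <= 2 * Pp g3 * (c * Pp g1)) by (apply Rmult_le_compat_l; nra).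
    assert (0 <= dM * (Pp g3 * g3)) by (rewrite E3; apply Rmult_le_pos; lra).
    pose proof (Rle_0_sqr (Pp g1 - Pp g3)). unfold Rsqr in *.
    assert (0 <= c * ((Pp g1 - Pp g3) * (Pp g1 - Pp g3))) by (apply Rmult_le_pos; lra).
    unfold sqp. nra. }
  assert (T1' : 2 * Pp g1 * R <= k3 * (sqp g1 + sqp g3) + k2 * (sqp g1 + sqp g2)).
  { unfold R, sqp.
    pose proof (Rle_0_sqr (Pp g1 - Pp g3)). pose proof (Rle_0_sqr (Pp g1 - Pp g2)). unfold Rsqr in *.
    assert (0 <= k3 * ((Pp g1 - Pp g3) * (Pp g1 - Pp g3))) by (apply Rmult_le_pos; lra).
    assert (0 <= k2 * ((Pp g1 - Pp g2) * (Pp g1 - Pp g2))) by (apply Rmult_le_pos; lra).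
    nra. }
  set (V := sqp g1 + sqp g2 + sqp g3).
  assert (HC : Ccore bE nE dM nu g k = 2 * (k3 + k2 + c + 1)) by reflexivity.
  rewrite HC.
  assert (k3 * (sqp g1 + sqp g3) <= k3 * V) by (apply Rmult_le_compat_l; unfold V; lra).
  assert (k2 * (sqp g1 + sqp g2) <= k2 * V) by (apply Rmult_le_compat_l; unfold V; lra).
  assert (c * (sqp g1 + sqp g3) <= c * V) by (apply Rmult_le_compat_l; unfold V; lra).
  assert (sqp g2 + sqp g3 <= V) by (unfold V; lra).
  assert (0 <= (k3 + k2 + c + 1) * V) by (apply Rmult_le_pos; unfold V; lra).
  fold g2. lra.
Qed.

Lemma Lip_divc a b f K : Lip a b f -> Lip a b (fun s => f s / K).
Proof. intros [L H]. exists (Rabs (/ K) * L). intros s t Hs Ht.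
  replace (f s / K - f t / K) with (/ K * (f s - f t)) by (unfold Rdiv; ring). rewrite Rabs_mult.
  rewrite Rmult_assoc. apply Rmult_le_compat_l. apply Rabs_pos. auto. Qed.

Lemma params_facts bE nE dE dF nu g la ds : 0 < bE -> 0 < nE -> 0 < dE -> 0 < dF -> 0 < nu -> 0 < g ->
  0 < ds ->
  1 < calR0 bE nE dE dF nu ->
  (bE * nu * nE - (nE + dE) * dF) * ds / (g * (nE + dE) * dF) < la ->
  let k := kappa_bar bE nE dE dF nu g in
  0 < k /\ ds < k * la /\ bE * nu * nE * k = dF * (nE + dE) * (k + g) /\ 0 < bE * nu * nE - dF * (nE + dE).
Proof. intros HbE HnE HdE HdF Hnu Hg Hds HR0 Hla k.
  unfold calR0 in HR0. set (a := nE + dE) in *.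
  assert (Ha : 0 < a) by (unfold a; lra).
  assert (HD : 0 < bE * nu * nE - dF * a).
  { assert (Hp : 0 < dF * a) by (apply Rmult_lt_0_compat; lra).
    apply (Rmult_lt_compat_r (dF * a) _ _ Hp) in HR0.
    unfold Rdiv in HR0. rewrite Rmult_assoc, Rinv_l in HR0 by nra. lra. }
  assert (Hk : k = g * dF * a / (bE * nu * nE - dF * a)) by reflexivity.
  split; [|split; [|split]]; auto.
  - rewrite Hk. apply Rdiv_lt_0_compat; [repeat apply Rmult_lt_0_compat; lra | lra].
  - rewrite Hk. replace ((bE * nu * nE - a * dF) * ds) with ((bE * nu * nE - dF * a) * ds) in Hla by ring.
    assert (Hp : 0 < g * a * dF) by (repeat apply Rmult_lt_0_compat; lra).
    apply (Rmult_lt_compat_r (g * a * dF) _ _ Hp) in Hla.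
    unfold Rdiv in Hla. rewrite Rmult_assoc, Rinv_l in Hla by nra.
    apply (Rmult_lt_reg_r (bE * nu * nE - dF * a)); auto.
    replace (g * dF * a / (bE * nu * nE - dF * a) * la * (bE * nu * nE - dF * a)) with (la * (g * a * dF))
      by (field; lra). lra.
  - rewrite Hk. field. lra.
Qed.

Lemma in_dom_le Tmax s t : in_dom Tmax t -> 0 <= s <= t -> in_dom Tmax s.
Proof. unfold in_dom. destruct Tmax; intros [H1 H2] H3; split; lra || auto. Qed.

Lemma sol_lip X Tmax z b : filippov_sol X Tmax z -> in_dom Tmax b ->
  Lip 0 b (fun s => cE (z s)) /\ Lip 0 b (fun s => cM (z s)) /\
  Lip 0 b (fun s => cF (z s)) /\ Lip 0 b (fun s => cMs (z s)).
Proof. intros [_ [_ [HL _]]] Hb. destruct (HL b Hb) as [L HLb].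
  repeat split; exists L; intros s t Hs Ht; specialize (HLb s t Hs Ht);
  destruct (comp_le_vnorm (vsub (z s) (z t))) as [h1 [h2 [h3 h4]]]; simpl in *; lra. Qed.

Ltac lipt HE HM HF HS :=
  repeat first [ exact HE | exact HM | exact HF | exact HS | apply Lip_minus | apply Lip_plus | apply Lip_opp
               | apply Lip_scal | apply Lip_divc | apply Lip_const
               | apply (Lip_comp _ _ sqp); [lra | apply sqp_locLip | ]
               | apply Lip_mult; [lra | | ] ].

Ltac dert HE HM HF HS :=
  repeat first [ exact HE | exact HM | exact HF | exact HS | apply D_minus | apply D_plus
               | apply D_scal | apply D_divc | apply D_const
               | apply (D_comp sqp); [ | apply D_sqp]
               | apply D_mult ].

Lemma sol_deriv X Tmax z : filippov_sol X Tmax z ->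
  exists Nt, null1 Nt /\ forall t, 0 < t -> in_dom Tmax t -> ~ Nt t ->
    exists v, has_deriv4 z t v /\ filippov_set X (z t) v.
Proof. intros [_ [_ [_ H]]]. exact H. Qed.

Lemma sol_D' X Tmax z t : filippov_sol X Tmax z -> in_dom Tmax t -> in_D' (z t).
Proof. intros [_ [H _]] Ht. auto. Qed.

Lemma invariance (betaE nuE deltaE deltaM deltaF deltas K nu gammas lambda : R)
  (HbetaE : 0 < betaE) (HnuE : 0 < nuE) (HdeltaE : 0 < deltaE)
  (HdeltaM : 0 < deltaM) (HdeltaF : 0 < deltaF) (Hdeltas : 0 < deltas)
  (HK : 0 < K) (Hnu : 0 < nu < 1) (Hgammas : 0 < gammas <= 1)
  (HR0 : 1 < calR0 betaE nuE deltaE deltaF nu)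
  (Hlambda : (betaE * nu * nuE - (nuE + deltaE) * deltaF) * deltas
             / (gammas * (nuE + deltaE) * deltaF) < lambda) :
  pos_invariant (Xcl betaE nuE deltaE deltaM deltaF deltas K nu gammas lambda)
    (Mset betaE nuE deltaE deltaM K nu (kappa_bar betaE nuE deltaE deltaF nu gammas)).
Proof.
  destruct (params_facts betaE nuE deltaE deltaF nu gammas lambda deltas ltac:(lra) ltac:(lra) ltac:(lra)
     ltac:(lra) ltac:(lra) ltac:(lra) ltac:(lra) HR0 Hlambda) as [Hk [Hkla [Hid HD]]].
  set (k := kappa_bar betaE nuE deltaE deltaF nu gammas) in *.
  intros Tmax z Hsol H0 t Ht.
  assert (Ht0 : 0 <= t) by (destruct Ht; auto).
  set (V := fun s => sqp (betaE * cF (z s) * (1 - cE (z s) / K) - (nuE + deltaE) * cE (z s))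
                   + sqp (cM (z s) - k * cMs (z s))
                   + sqp ((1 - nu) * nuE * cE (z s) - deltaM * cM (z s))).
  destruct (sol_deriv _ _ _ Hsol) as [Nt [HNt Hder]].
  assert (HV : V t <= 0).
  { apply (gron V 0 t Nt (Ccore betaE nuE deltaM nu gammas k)); auto.
    - destruct (sol_lip _ _ _ _ Hsol Ht) as [LE [LM [LF LS]]].
      unfold V. lipt LE LM LF LS.
    - destruct H0 as [[HD0 H1] [[_ H2] [_ H3]]]. unfold V.
      cbv beta. rewrite !sqp_zero; lra.
    - intros s Hs HNs. assert (Hds : in_dom Tmax s) by (apply (in_dom_le _ _ t); auto; lra).
      destruct (Hder s ltac:(lra) Hds HNs) as [v [[HdE [HdM [HdF HdS]]] Hf]].
      destruct (sol_D' _ _ _ _ Hsol Hds) as [HE [HM [HF HS]]].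
      eexists. split.
      + eapply dpl_val. unfold V. dert HdE HdM HdF HdS. cbv beta. reflexivity.
      + cbv beta.
        pose proof (FA_E _ _ _ _ _ _ _ _ _ _ _ _ HK Hf) as FE.
        pose proof (FA_M _ _ _ _ _ _ _ _ _ _ _ _ Hf) as FM.
        pose proof (FA_S _ _ _ _ _ _ _ _ _ _ _ _ Hf) as FS.
        pose proof (FA_Flow betaE nuE deltaE deltaM deltaF deltas K nu gammas lambda (z s) v ltac:(lra) ltac:(lra) ltac:(lra) Hf) as FL.
        pose proof (FA_Fup betaE nuE deltaE deltaM deltaF deltas K nu gammas lambda (z s) v ltac:(lra) ltac:(lra) ltac:(lra) Hf) as FU.
        assert (FP : 0 < cM (z s) + gammas * cMs (z s) -> cF v <= nu * nuE * cE (z s) * (cM (z s) / (cM (z s) + gammas * cMs (z s))) - deltaF * cF (z s)).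
        { intros Hp. apply (FA_Fpos betaE nuE deltaE deltaM deltaF deltas K nu gammas lambda (z s) v ltac:(lra) ltac:(lra) ltac:(lra) (sol_D' _ _ _ _ Hsol Hds) Hp Hf). }
        eapply Rle_trans; [|apply (core betaE nuE deltaE deltaM deltaF deltas K nu gammas lambda k
           (cE (z s)) (cM (z s)) (cF (z s)) (cMs (z s)) (cE v) (cM v) (cF v) (cMs v)); auto; lra].
        right. ring. }
  destruct (sol_D' _ _ _ _ Hsol Ht) as [HE [HM [HF HS]]].
  unfold V in HV.
  pose proof (sqp_ge0 (betaE * cF (z t) * (1 - cE (z t) / K) - (nuE + deltaE) * cE (z t))) as Q1.
  pose proof (sqp_ge0 (cM (z t) - k * cMs (z t))) as Q2.
  pose proof (sqp_ge0 ((1 - nu) * nuE * cE (z t) - deltaM * cM (z t))) as Q3.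
  assert (D' : in_D' (z t)) by (repeat split; auto).
  assert (R1 : betaE * cF (z t) * (1 - cE (z t) / K) - (nuE + deltaE) * cE (z t) <= 0) by (apply sqp_le0; lra).
  assert (R2 : cM (z t) - k * cMs (z t) <= 0) by (apply sqp_le0; lra).
  assert (R3 : (1 - nu) * nuE * cE (z t) - deltaM * cM (z t) <= 0) by (apply sqp_le0; lra).
  split; [|split]; split; auto; lra.
Qed.

Definition Hyp (betaE nuE deltaE deltaM deltaF deltas K nu gammas lambda : R) : Prop :=
  0 < betaE /\ 0 < nuE /\ 0 < deltaE /\ 0 < deltaM /\ 0 < deltaF /\ 0 < deltas /\
  0 < K /\ (0 < nu < 1) /\ (0 < gammas <= 1) /\
  1 < calR0 betaE nuE deltaE deltaF nu /\
  (betaE * nu * nuE - (nuE + deltaE) * deltaF) * deltas / (gammas * (nuE + deltaE) * deltaF) < lambda.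

Lemma pt_info bE nE dE dM dF ds K nu g la Tmax z s :
  Hyp bE nE dE dM dF ds K nu g la ->
  filippov_sol (Xcl bE nE dE dM dF ds K nu g la) Tmax z ->
  forall Nt, (forall t, 0 < t -> in_dom Tmax t -> ~ Nt t ->
    exists v, has_deriv4 z t v /\ filippov_set (Xcl bE nE dE dM dF ds K nu g la) (z t) v) ->
  0 < s -> in_dom Tmax s -> ~ Nt s ->
  exists v, has_deriv4 z s v /\
    cE v = bE * cF (z s) * (1 - cE (z s) / K) - (nE + dE) * cE (z s) /\
    cM v = (1 - nu) * nE * cE (z s) - dM * cM (z s) /\
    cMs v = la * cM (z s) - ds * cMs (z s) /\
    cF v <= nu * nE * cE (z s) - dF * cF (z s) /\
    (0 < cM (z s) + g * cMs (z s) ->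
       cF v <= nu * nE * cE (z s) * (cM (z s) / (cM (z s) + g * cMs (z s))) - dF * cF (z s)).
Proof. intros HH Hsol Nt Hder Hs Hds HNs.
  destruct HH as [HbE [HnE [HdE [HdM [HdF [Hds' [HK [Hnu [Hg _]]]]]]]]].
  destruct (Hder s Hs Hds HNs) as [v [Hd Hf]]. exists v. split; auto.
  split. apply (FA_E _ _ _ _ _ _ _ _ _ _ _ _ HK Hf).
  split. apply (FA_M _ _ _ _ _ _ _ _ _ _ _ _ Hf).
  split. apply (FA_S _ _ _ _ _ _ _ _ _ _ _ _ Hf).
  split. apply (FA_Fup bE nE dE dM dF ds K nu g la (z s) v ltac:(lra) ltac:(lra) ltac:(lra) Hf).
  intros Hp. apply (FA_Fpos bE nE dE dM dF ds K nu g la (z s) v ltac:(lra) ltac:(lra) ltac:(lra)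
     (sol_D' _ _ _ _ Hsol Hds) Hp Hf).
Qed.

Lemma inf_mono (f : R -> R) : (forall t, 0 <= t -> 0 <= f t) ->
  (forall t1 t2, 0 <= t1 <= t2 -> f t2 <= f t1) ->
  exists l, 0 <= l /\ (forall t, 0 <= t -> l <= f t) /\
    (forall b, (forall t, 0 <= t -> b <= f t) -> b <= l) /\
    (forall η, 0 < η -> exists T, 0 <= T /\ forall t, T <= t -> f t <= l + η).
Proof. intros Hpos Hmono.
  set (E := fun x => exists t, 0 <= t /\ x = - f t).
  assert (Hb : bound E). { exists 0. intros x [t [Ht ->]]. pose proof (Hpos t Ht). lra. }
  assert (He : exists x, E x). { exists (- f 0). exists 0. split; [lra|auto]. }
  destruct (completeness E Hb He) as [m [Hub Hlub]].
  exists (- m). split; [|split; [|split]].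
  - assert (m <= 0). { apply Hlub. intros x [t [Ht ->]]. pose proof (Hpos t Ht). lra. } lra.
  - intros t Ht. assert (- f t <= m) by (apply Hub; exists t; split; auto). lra.
  - intros b Hb'. assert (m <= - b). { apply Hlub. intros x [t [Ht ->]]. pose proof (Hb' t Ht). lra. } lra.
  - intros η Hη. destruct (classic (exists t, 0 <= t /\ f t <= - m + η)) as [[T [HT HfT]]|Hn].
    + exists T. split; auto. intros t Ht. pose proof (Hmono T t ltac:(lra)). lra.
    + exfalso. assert (m <= m - η); [|lra]. apply Hlub. intros x [t [Ht ->]].
      destruct (Rle_dec (- f t) (m - η)); auto. exfalso. apply Hn. exists t. split; auto. lra.
Qed.

Lemma sol_facts bE nE dE dM dF ds K nu g la Tmax z :
  Hyp bE nE dE dM dF ds K nu g la ->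
  filippov_sol (Xcl bE nE dE dM dF ds K nu g la) Tmax z ->
  Mset bE nE dE dM K nu (kappa_bar bE nE dE dF nu g) (z 0) ->
  (forall t, in_dom Tmax t -> Mset bE nE dE dM K nu (kappa_bar bE nE dE dF nu g) (z t)) /\
  (forall t1 t2, 0 <= t1 <= t2 -> in_dom Tmax t2 -> cE (z t2) <= cE (z t1)) /\
  (forall t1 t2, 0 <= t1 <= t2 -> in_dom Tmax t2 -> cM (z t2) <= cM (z t1)) /\
  (forall t, in_dom Tmax t -> cMs (z t) <= Rmax (cMs (z 0)) (la * cM (z 0) / ds)).
Proof. intros HH Hsol H0.
  pose proof HH as HH'.
  destruct HH' as [HbE [HnE [HdE [HdM [HdF [Hds [HK [Hnu [Hg [HR0 Hla]]]]]]]]]].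
  pose proof (invariance bE nE dE dM dF ds K nu g la HbE HnE HdE HdM HdF Hds HK Hnu Hg HR0 Hla) as Hinv.
  assert (HI : forall t, in_dom Tmax t -> Mset bE nE dE dM K nu (kappa_bar bE nE dE dF nu g) (z t))
    by (intros; eapply Hinv; eauto).
  destruct (params_facts bE nE dE dF nu g la ds ltac:(lra) ltac:(lra) ltac:(lra)
     ltac:(lra) ltac:(lra) ltac:(lra) ltac:(lra) HR0 Hla) as [Hk [Hkla [Hid HD]]].
  destruct (sol_deriv _ _ _ Hsol) as [Nt [HNt Hder]].
  assert (HEm : forall t1 t2, 0 <= t1 <= t2 -> in_dom Tmax t2 -> cE (z t2) <= cE (z t1)).
  { intros t1 t2 H12 Ht2. apply (mono (fun s => cE (z s)) t1 t2 Nt); auto. lra.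
    destruct (sol_lip _ _ _ _ Hsol Ht2) as [LE _]. apply (Lip_sub 0 t2); auto; lra.
    intros s Hs HNs. assert (Hds' : in_dom Tmax s) by (apply (in_dom_le _ _ t2); auto; lra).
    destruct (pt_info _ _ _ _ _ _ _ _ _ _ _ _ s HH Hsol Nt Hder ltac:(lra) Hds' HNs) as [v [[HdE' _] [FE _]]].
    exists (cE v). split; auto. rewrite FE. destruct (HI s Hds') as [[_ T1] _]. lra. }
  assert (HMm : forall t1 t2, 0 <= t1 <= t2 -> in_dom Tmax t2 -> cM (z t2) <= cM (z t1)).
  { intros t1 t2 H12 Ht2. apply (mono (fun s => cM (z s)) t1 t2 Nt); auto. lra.
    destruct (sol_lip _ _ _ _ Hsol Ht2) as [_ [LM _]]. apply (Lip_sub 0 t2); auto; lra.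
    intros s Hs HNs. assert (Hds' : in_dom Tmax s) by (apply (in_dom_le _ _ t2); auto; lra).
    destruct (pt_info _ _ _ _ _ _ _ _ _ _ _ _ s HH Hsol Nt Hder ltac:(lra) Hds' HNs) as [v [[_ [HdM' _]] [_ [FM _]]]].
    exists (cM v). split; auto. rewrite FM. destruct (HI s Hds') as [_ [_ [_ T3]]]. lra. }
  split; [auto|split; [auto|split; [auto|]]].
  intros t Ht. assert (Ht0 : 0 <= t) by (destruct Ht; auto).
  set (B := Rmax (cMs (z 0)) (la * cM (z 0) / ds)).
  assert (Hla0 : 0 < la) by nra.
  assert (HV : (fun s => sqp (cMs (z s) - B)) t <= 0).
  { apply (gron (fun s => sqp (cMs (z s) - B)) 0 t Nt 0); auto.
    - destruct (sol_lip _ _ _ _ Hsol Ht) as [LE [LM [LF LS]]]. lipt LE LM LF LS.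
    - cbv beta. rewrite sqp_zero; [lra|]. unfold B. pose proof (Rmax_l (cMs (z 0)) (la * cM (z 0) / ds)). lra.
    - intros s Hs HNs. assert (Hds' : in_dom Tmax s) by (apply (in_dom_le _ _ t); auto; lra).
      destruct (pt_info _ _ _ _ _ _ _ _ _ _ _ _ s HH Hsol Nt Hder ltac:(lra) Hds' HNs) as [v [[_ [_ [_ HdS']]] [_ [_ [FS _]]]]].
      eexists. split. apply (D_comp sqp). apply D_minus. exact HdS'. apply D_const. apply D_sqp.
      pose proof (HMm 0 s ltac:(lra) Hds').
      assert (la * cM (z s) <= ds * B).
      { unfold B. pose proof (Rmax_r (cMs (z 0)) (la * cM (z 0) / ds)).
        assert (la * cM (z 0) = ds * (la * cM (z 0) / ds)) by (field; lra). nra. }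
      pose proof (Pp_ge0 (cMs (z s) - B)). pose proof (Pp_mul (cMs (z s) - B)). pose proof (sqp_ge0 (cMs (z s) - B)).
      assert (cMs v - 0 <= - ds * (cMs (z s) - B)) by (rewrite FS; lra).
      assert (2 * Pp (cMs (z s) - B) * (cMs v - 0) <= 2 * Pp (cMs (z s) - B) * (- ds * (cMs (z s) - B)))
        by (apply Rmult_le_compat_l; lra).
      nra. }
  cbv beta in HV. apply sqp_le0 in HV. lra.
Qed.

Lemma Fbound bE a K E F : 0 < bE -> 0 < K -> 0 <= E -> 0 <= F -> E <= K / 2 ->
  bE * F * (1 - E / K) <= a * E -> F <= 2 * a * E / bE.
Proof. intros HbE HK HE HF HEK H.
  assert (1 / 2 <= 1 - E / K).
  { assert (E / K <= 1 / 2). { apply (Rmult_le_reg_r K); auto. unfold Rdiv. rewrite Rmult_assoc, Rinv_l by lra. lra. } lra. }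
  assert (bE * F * (1 / 2) <= bE * F * (1 - E / K)) by (apply Rmult_le_compat_l; nra).
  apply (Rmult_le_reg_r bE); auto. unfold Rdiv. rewrite Rmult_assoc, Rinv_l by lra. lra. Qed.

Lemma stability bE nE dE dM dF ds K nu g la :
  Hyp bE nE dE dM dF ds K nu g la ->
  forall eps, 0 < eps -> exists d, 0 < d /\
     forall Tmax z, filippov_sol (Xcl bE nE dE dM dF ds K nu g la) Tmax z ->
       Mset bE nE dE dM K nu (kappa_bar bE nE dE dF nu g) (z 0) -> vnorm (z 0) < d ->
       forall t, 0 < t -> in_dom Tmax t -> vnorm (z t) < eps.
Proof. intros HH eps Heps.
  pose proof HH as HH'.
  destruct HH' as [HbE [HnE [HdE [HdM [HdF [Hds [HK [Hnu [Hg [HR0 Hla]]]]]]]]]].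
  destruct (params_facts bE nE dE dF nu g la ds ltac:(lra) ltac:(lra) ltac:(lra)
     ltac:(lra) ltac:(lra) ltac:(lra) ltac:(lra) HR0 Hla) as [Hk [Hkla [Hid HD]]].
  set (kk := kappa_bar bE nE dE dF nu g) in *.
  assert (Hla0 : 0 < la) by nra.
  set (a := nE + dE).
  assert (Ha : 0 < a) by (unfold a; lra).
  set (C := 3 + 2 * a / bE + la / ds).
  assert (HC : 3 <= C) by (unfold C; assert (0 <= 2 * a / bE) by (apply Rdiv_le_0_compat; lra);
     assert (0 <= la / ds) by (apply Rdiv_le_0_compat; lra); lra).
  exists (Rmin (K / 2) (eps / C)). split. apply Rmin_glb_lt. lra. apply Rdiv_lt_0_compat; lra.
  intros Tmax z Hsol H0 Hn0 t Ht Hdt.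
  set (d := Rmin (K / 2) (eps / C)) in *.
  assert (Hd1 : d <= K / 2) by apply Rmin_l. assert (Hd2 : d <= eps / C) by apply Rmin_r.
  destruct (sol_facts _ _ _ _ _ _ _ _ _ _ _ _ HH Hsol H0) as [HI [HEm [HMm HSb]]].
  destruct (comp_le_vnorm (z 0)) as [c1 [c2 [c3 c4]]].
  destruct H0 as [[[E0 [M0 [F0 S0]]] _] _].
  rewrite Rabs_right in c1, c2, c3, c4 by lra.
  destruct (HI t Hdt) as [[[Et [Mt [Ft St]]] T1] [[_ T2] [_ T3]]].
  assert (Ht0 : 0 <= t) by lra.
  pose proof (HEm 0 t ltac:(lra) Hdt). pose proof (HMm 0 t ltac:(lra) Hdt). pose proof (HSb t Hdt).
  assert (HFt : cF (z t) <= 2 * a * cE (z t) / bE) by (apply (Fbound bE a K); auto; lra).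
  assert (HS2 : cMs (z t) <= d + la / ds * d).
  { assert (Rmax (cMs (z 0)) (la * cM (z 0) / ds) <= d + la / ds * d).
    { apply Rmax_lub. assert (0 <= la / ds * d) by (apply Rmult_le_pos; [apply Rdiv_le_0_compat|]; lra). lra.
      assert (la * cM (z 0) / ds = la / ds * cM (z 0)) by (field; lra). rewrite H2.
      assert (la / ds * cM (z 0) <= la / ds * d) by (apply Rmult_le_compat_l; [apply Rdiv_le_0_compat|]; lra).
      lra. }
    lra. }
  assert (HF2 : cF (z t) < 2 * a / bE * d).
  { assert (2 * a * cE (z t) / bE = 2 * a / bE * cE (z t)) by (field; lra).
    assert (0 < 2 * a / bE) by (apply Rdiv_lt_0_compat; lra).
    assert (2 * a / bE * cE (z t) < 2 * a / bE * d) by (apply Rmult_lt_compat_l; lra). lra. }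
  eapply Rle_lt_trans. apply vnorm_le_sum.
  rewrite !Rabs_right by lra.
  assert (C * d <= eps).
  { apply Rle_trans with (C * (eps / C)). apply Rmult_le_compat_l; lra. right; field; lra. }
  assert (C * d = 3 * d + 2 * a / bE * d + la / ds * d) by (unfold C; ring).
  lra.
Qed.

Lemma dom_None t : 0 <= t -> in_dom None t.
Proof. intros; split; auto. Qed.

Lemma attract bE nE dE dM dF ds K nu g la :
  Hyp bE nE dE dM dF ds K nu g la ->
  forall z, filippov_sol (Xcl bE nE dE dM dF ds K nu g la) None z ->
     Mset bE nE dE dM K nu (kappa_bar bE nE dE dF nu g) (z 0) ->
     forall eps, 0 < eps -> exists T, forall t, T <= t -> vnorm (z t) < eps.
Proof. intros HH z Hsol H0.
  pose proof HH as HH'.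
  destruct HH' as [HbE [HnE [HdE [HdM [HdF [Hds [HK [Hnu [Hg [HR0 Hla]]]]]]]]]].
  destruct (params_facts bE nE dE dF nu g la ds ltac:(lra) ltac:(lra) ltac:(lra)
     ltac:(lra) ltac:(lra) ltac:(lra) ltac:(lra) HR0 Hla) as [Hk [Hkla [Hid HD]]].
  set (kk := kappa_bar bE nE dE dF nu g) in *.
  assert (Hla0 : 0 < la) by nra.
  set (a := nE + dE) in *. assert (Ha : 0 < a) by (unfold a; lra).
  set (c := (1 - nu) * nE). assert (Hc : 0 < c) by (unfold c; nra).
  destruct (sol_facts _ _ _ _ _ _ _ _ _ _ _ _ HH Hsol H0) as [HI [HEm [HMm HSb]]].
  destruct (sol_deriv _ _ _ Hsol) as [Nt [HNt Hder]].
  assert (HD' : forall t, 0 <= t -> in_D' (z t)) by (intros; apply (sol_D' _ _ _ _ Hsol); apply dom_None; auto).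
  assert (Hpt : forall s, 0 < s -> ~ Nt s -> exists v, has_deriv4 z s v /\
    cE v = bE * cF (z s) * (1 - cE (z s) / K) - a * cE (z s) /\
    cM v = c * cE (z s) - dM * cM (z s) /\
    cMs v = la * cM (z s) - ds * cMs (z s) /\
    cF v <= nu * nE * cE (z s) - dF * cF (z s) /\
    (0 < cM (z s) + g * cMs (z s) ->
       cF v <= nu * nE * cE (z s) * (cM (z s) / (cM (z s) + g * cMs (z s))) - dF * cF (z s))).
  { intros s Hs HNs. exact (pt_info _ _ _ _ _ _ _ _ _ _ _ _ s HH Hsol Nt Hder Hs (dom_None s ltac:(lra)) HNs). }
  assert (HLip : forall T0 b, 0 <= T0 <= b ->
     Lip T0 b (fun s => cE (z s)) /\ Lip T0 b (fun s => cM (z s)) /\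
     Lip T0 b (fun s => cF (z s)) /\ Lip T0 b (fun s => cMs (z s))).
  { intros T0 b Hb. destruct (sol_lip _ _ _ b Hsol (dom_None b ltac:(lra))) as [LE [LM [LF LS]]].
    repeat split; apply (Lip_sub 0 b); auto; lra. }
  assert (HT1 : forall t, 0 <= t -> bE * cF (z t) * (1 - cE (z t) / K) <= a * cE (z t)).
  { intros t Ht. destruct (HI t (dom_None t Ht)) as [[_ T1] _]. auto. }
  assert (HT3 : forall t, 0 <= t -> c * cE (z t) <= dM * cM (z t)).
  { intros t Ht. destruct (HI t (dom_None t Ht)) as [_ [_ [_ T3]]]. auto. }
  destruct (inf_mono (fun t => cE (z t)) (fun t Ht => proj1 (HD' t Ht))
     (fun t1 t2 H12 => HEm t1 t2 H12 (dom_None t2 ltac:(lra)))) as [e [He0 [HeL [HeG HeT]]]].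
  assert (HE0 : e <= 0).
  { apply Rnot_gt_le. intro Hep.
    destruct (inf_mono (fun t => cM (z t)) (fun t Ht => proj1 (proj2 (HD' t Ht)))
       (fun t1 t2 H12 => HMm t1 t2 H12 (dom_None t2 ltac:(lra)))) as [mi [Hmi0 [HmiL [HmiG HmiT]]]].
    assert (Hmi : c * e / dM <= mi).
    { apply HmiG. intros t Ht. pose proof (HT3 t Ht). pose proof (HeL t Ht).
      apply (Rmult_le_reg_r dM); auto. unfold Rdiv; rewrite Rmult_assoc, Rinv_l by lra. nra. }
    assert (Hmip : 0 < mi). { assert (0 < c * e / dM) by (apply Rdiv_lt_0_compat; nra). lra. }
    assert (HSd := decay (fun s => - cMs (z s)) 0 Nt (- la * mi) ds Hds HNt
       (fun b Hb => Lip_opp _ _ _ (proj2 (proj2 (proj2 (HLip 0 b ltac:(lra))))))).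
    assert (HSd' : forall η, 0 < η -> exists T, forall t, T <= t -> - cMs (z t) <= - la * mi / ds + η).
    { apply HSd. intros t Ht HNt'. destruct (Hpt t ltac:(lra) HNt') as [v [[_ [_ [_ HdS']]] [_ [_ [FS _]]]]].
      exists (- cMs v). split. apply (derivable_pt_lim_opp (fun s => cMs (z s))). exact HdS'.
      rewrite FS. pose proof (HmiL t ltac:(lra)).
      assert (la * mi <= la * cM (z t)) by (apply Rmult_le_compat_l; lra). lra. }
    clear HSd. rename HSd' into HSd.
    set (Q := kk / (kk + g)). set (qs := ds / (ds + g * la)). set (q1 := (Q + qs) / 2).
    assert (Hg0 : 0 < g) by lra.
    assert (HqsQ : qs < Q).
    { unfold qs, Q. assert (Hp : 0 < (ds + g * la) * (kk + g)) by (apply Rmult_lt_0_compat; nra).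
      apply (Rmult_lt_reg_r _ _ _ Hp).
      replace (ds / (ds + g * la) * ((ds + g * la) * (kk + g))) with (ds * (kk + g)) by (field; nra).
      replace (kk / (kk + g) * ((ds + g * la) * (kk + g))) with (kk * (ds + g * la)) by (field; lra).
      nra. }
    assert (Hqs0 : 0 < qs) by (unfold qs; apply Rdiv_lt_0_compat; nra).
    assert (HQ1 : Q < 1).
    { unfold Q. apply (Rmult_lt_reg_r (kk + g)); [lra|]. unfold Rdiv; rewrite Rmult_assoc, Rinv_l by lra; lra. }
    assert (Hq1 : qs < q1 < Q) by (unfold q1; lra).
    assert (Hq1ds : ds < q1 * (ds + g * la)).
    { assert (qs * (ds + g * la) = ds) by (unfold qs; field; nra). nra. }
    set (Δ := q1 * g * la * mi / ds - mi * (1 - q1)).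
    assert (HΔ : 0 < Δ).
    { assert (Δ = mi / ds * (q1 * g * la - ds * (1 - q1))) by (unfold Δ; field; lra). rewrite H.
      apply Rmult_lt_0_compat. apply Rdiv_lt_0_compat; lra. nra. }
    set (η1 := Δ / (1 + g)).
    assert (Hη1 : 0 < η1) by (unfold η1; apply Rdiv_lt_0_compat; lra).
    destruct (HmiT η1 Hη1) as [T1 [HT1p HT1']].
    destruct (HSd η1 Hη1) as [T2 HT2].
    assert (Hq : forall t, Rmax T1 T2 <= t -> 0 <= t ->
       0 < cM (z t) + g * cMs (z t) /\ cM (z t) / (cM (z t) + g * cMs (z t)) <= q1).
    { intros t Ht Ht0. pose proof (Rmax_l T1 T2). pose proof (Rmax_r T1 T2).
      pose proof (HmiL t Ht0). destruct (HD' t Ht0) as [_ [_ [_ St]]].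
      pose proof (HT1' t ltac:(lra)) as BM. pose proof (HT2 t ltac:(lra)) as BS. cbv beta in BS.
      assert (BS' : la * mi / ds - η1 <= cMs (z t)).
      { assert (- la * mi / ds = - (la * mi / ds)) by (field; lra). lra. }
      assert (Hs : 0 < cM (z t) + g * cMs (z t)) by nra.
      split; auto.
      assert (cM (z t) * (1 - q1) <= q1 * g * cMs (z t)).
      { assert (cM (z t) * (1 - q1) <= (mi + η1) * (1 - q1)) by (apply Rmult_le_compat_r; lra).
        assert (q1 * g * (la * mi / ds - η1) <= q1 * g * cMs (z t)) by (apply Rmult_le_compat_l; nra).
        assert (η1 * (1 - q1 + q1 * g) <= η1 * (1 + g)) by (apply Rmult_le_compat_l; nra).
        assert (η1 * (1 + g) = Δ) by (unfold η1; field; lra).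
        assert (q1 * g * (la * mi / ds) = q1 * g * la * mi / ds) by (field; lra).
        unfold Δ in *. nra. }
      apply (Rmult_le_reg_r (cM (z t) + g * cMs (z t))); auto.
      unfold Rdiv; rewrite Rmult_assoc, Rinv_l by lra. nra. }
    set (gap := a * e * (1 - q1 / Q)).
    assert (HQ0 : 0 < Q) by lra.
    assert (Hgap : 0 < gap).
    { unfold gap. apply Rmult_lt_0_compat. nra. assert (q1 / Q < 1).
      { apply (Rmult_lt_reg_r Q); auto. unfold Rdiv; rewrite Rmult_assoc, Rinv_l by lra. lra. } lra. }
    assert (HbnQ : bE * nu * nE = dF * a / Q).
    { unfold Q. apply (Rmult_eq_reg_r kk); [|lra]. rewrite Hid. field. split; lra. }
    set (K3 := bE * nu * nE * q1 / dF).
    assert (HK3 : K3 = a * q1 / Q) by (unfold K3; rewrite HbnQ; field; split; lra).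
    assert (HK30 : 0 <= K3) by (rewrite HK3; apply Rdiv_le_0_compat; nra).
    set (η := gap / (2 * (K3 + bE))).
    assert (Hη : 0 < η) by (unfold η; apply Rdiv_lt_0_compat; lra).
    destruct (HeT η Hη) as [TE [HTE HTE']].
    set (T3 := Rmax (Rmax (Rmax T1 T2) TE) 0).
    assert (HT3p : Rmax T1 T2 <= T3 /\ TE <= T3 /\ 0 <= T3).
    { unfold T3. pose proof (Rmax_l (Rmax (Rmax T1 T2) TE) 0). pose proof (Rmax_r (Rmax (Rmax T1 T2) TE) 0).
      pose proof (Rmax_l (Rmax T1 T2) TE). pose proof (Rmax_r (Rmax T1 T2) TE). lra. }
    assert (HFd := decay (fun s => cF (z s)) T3 Nt (nu * nE * (e + η) * q1) dF HdF HNt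
       (fun b Hb => proj1 (proj2 (proj2 (HLip T3 b ltac:(lra)))))).
    destruct HFd with (η := η) as [T4 HT4]; auto.
    { intros t Ht HNt'. destruct (Hpt t ltac:(lra) HNt') as [v [[_ [_ [HdF' _]]] [_ [_ [_ [_ FP]]]]]].
      exists (cF v). split; auto. destruct (Hq t ltac:(lra) ltac:(lra)) as [Hs Hqq].
      specialize (FP Hs). destruct (HD' t ltac:(lra)) as [Et [Mt [Ft St]]].
      pose proof (HTE' t ltac:(lra)) as BE.
      assert (0 <= cM (z t) / (cM (z t) + g * cMs (z t))) by (apply Rdiv_le_0_compat; lra).
      assert (cE (z t) * (cM (z t) / (cM (z t) + g * cMs (z t))) <= (e + η) * q1) by (apply Rmult_le_compat; lra).
      assert (nu * nE * (cE (z t) * (cM (z t) / (cM (z t) + g * cMs (z t)))) <= nu * nE * ((e + η) * q1))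
        by (apply Rmult_le_compat_l; nra).
      nra. }
    set (T5 := Rmax T3 T4).
    assert (HT5 : T3 <= T5 /\ T4 <= T5) by (split; [apply Rmax_l | apply Rmax_r]).
    set (ts := T5 + 2 * cE (z T5) / gap + 1).
    assert (Hts : T5 < ts).
    { unfold ts. assert (0 <= 2 * cE (z T5) / gap) by (apply Rdiv_le_0_compat; [pose proof (HeL T5 ltac:(lra)); lra | lra]). lra. }
    assert (Hm : (fun s => cE (z s) + gap / 2 * s) ts <= (fun s => cE (z s) + gap / 2 * s) T5).
    { apply (mono (fun s => cE (z s) + gap / 2 * s) T5 ts Nt); auto. lra.
      apply Lip_plus. apply (HLip T5 ts ltac:(lra)). apply Lip_scal. apply Lip_id.
      intros t Ht HNt'. destruct (Hpt t ltac:(lra) HNt') as [v [[HdE' _] [FE _]]].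
      eexists. split. apply D_plus. exact HdE'. apply D_scal. apply D_id.
      destruct (HD' t ltac:(lra)) as [Et [Mt [Ft St]]].
      pose proof (HT4 t ltac:(lra)) as BF. pose proof (HeL t ltac:(lra)) as BE.
      assert (bE * cF (z t) * (1 - cE (z t) / K) <= bE * cF (z t)).
      { assert (0 <= cE (z t) / K) by (apply Rdiv_le_0_compat; lra).
        assert (0 <= bE * cF (z t)) by nra. nra. }
      assert (bE * cF (z t) <= bE * (nu * nE * (e + η) * q1 / dF + η)) by (apply Rmult_le_compat_l; lra).
      assert (bE * (nu * nE * (e + η) * q1 / dF + η) = K3 * (e + η) + bE * η) by (unfold K3; field; lra).
      assert (η * (K3 + bE) = gap / 2) by (unfold η; field; lra).
      assert (K3 * e = a * e * (q1 / Q)) by (rewrite HK3; field; lra).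
      assert (gap = a * e - a * e * (q1 / Q)) by (unfold gap; ring).
      assert (a * e <= a * cE (z t)) by (apply Rmult_le_compat_l; lra).
      rewrite FE. nra. }
    cbv beta in Hm.
    assert (gap / 2 * ts - gap / 2 * T5 = cE (z T5) + gap / 2) by (unfold ts; field; lra).
    pose proof (HeL ts ltac:(lra)). lra. }
  assert (He : e = 0) by lra. subst e.
  intros eps Heps.
  set (C5 := 1 + 2 * a / bE + (c / dM + 1) + (la * (c / dM + 1) / ds + 1)).
  assert (HC5 : 3 <= C5).
  { unfold C5. assert (0 <= 2 * a / bE) by (apply Rdiv_le_0_compat; lra).
    assert (0 <= c / dM) by (apply Rdiv_le_0_compat; lra).
    assert (0 <= la * (c / dM + 1) / ds) by (apply Rdiv_le_0_compat; [apply Rmult_le_pos|]; lra). lra. }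
  set (η := Rmin (K / 2) (eps / (2 * C5))).
  assert (Hη : 0 < η) by (apply Rmin_glb_lt; [lra | apply Rdiv_lt_0_compat; lra]).
  assert (Hη1 : η <= K / 2) by apply Rmin_l. assert (Hη2 : η <= eps / (2 * C5)) by apply Rmin_r.
  destruct (HeT η Hη) as [TE [HTE HTE']]. rewrite Rplus_0_l in HTE'.
  assert (HMd := decay (fun s => cM (z s)) TE Nt (c * η) dM HdM HNt
     (fun b Hb => proj1 (proj2 (HLip TE b ltac:(lra))))).
  destruct HMd with (η := η) as [TM HTM]; auto.
  { intros t Ht HNt'. destruct (Hpt t ltac:(lra) HNt') as [v [[_ [HdM' _]] [_ [FM _]]]].
    exists (cM v). split; auto. rewrite FM. pose proof (HTE' t ltac:(lra)).
    assert (c * cE (z t) <= c * η) by (apply Rmult_le_compat_l; lra). lra. }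
  set (T0 := Rmax TE TM).
  assert (HT0 : TE <= T0 /\ TM <= T0) by (split; [apply Rmax_l | apply Rmax_r]).
  assert (HSd := decay (fun s => cMs (z s)) T0 Nt (la * (c * η / dM + η)) ds Hds HNt
     (fun b Hb => proj2 (proj2 (proj2 (HLip T0 b ltac:(lra)))))).
  destruct HSd with (η := η) as [TS HTS]; auto.
  { intros t Ht HNt'. destruct (Hpt t ltac:(lra) HNt') as [v [[_ [_ [_ HdS']]] [_ [_ [FS _]]]]].
    exists (cMs v). split; auto. rewrite FS. pose proof (HTM t ltac:(lra)).
    assert (la * cM (z t) <= la * (c * η / dM + η)) by (apply Rmult_le_compat_l; lra). lra. }
  exists (Rmax T0 TS). intros t Ht.
  assert (HT : T0 <= t /\ TS <= t) by (split; eapply Rle_trans; [apply Rmax_l | eauto | apply Rmax_r | eauto]).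
  assert (Ht0 : 0 <= t) by lra.
  destruct (HD' t Ht0) as [Et [Mt [Ft St]]].
  pose proof (HTE' t ltac:(lra)) as BE. pose proof (HTM t ltac:(lra)) as BM. pose proof (HTS t ltac:(lra)) as BS.
  assert (BF : cF (z t) <= 2 * a * η / bE).
  { eapply Rle_trans. apply (Fbound bE a K (cE (z t))); auto; try lra.
    unfold Rdiv. apply Rmult_le_compat_r. left; apply Rinv_0_lt_compat; lra. nra. }
  eapply Rle_lt_trans. apply vnorm_le_sum.
  rewrite !Rabs_right by lra.
  assert (C5 * η <= eps / 2).
  { apply Rle_trans with (C5 * (eps / (2 * C5))). apply Rmult_le_compat_l; lra. right; field; lra. }
  assert (E1 : 2 * a * η / bE = 2 * a / bE * η) by (field; lra).
  assert (E2 : c * η / dM + η = (c / dM + 1) * η) by (field; lra).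
  assert (E3 : la * (c * η / dM + η) / ds + η = (la * (c / dM + 1) / ds + 1) * η) by (field; lra).
  assert (C5 * η = η + 2 * a / bE * η + (c / dM + 1) * η + (la * (c / dM + 1) / ds + 1) * η) by (unfold C5; ring).
  lra.
Qed.

Theorem theorem7
  (betaE nuE deltaE deltaM deltaF deltas K nu gammas lambda : R)
  (HbetaE : 0 < betaE) (HnuE : 0 < nuE) (HdeltaE : 0 < deltaE)
  (HdeltaM : 0 < deltaM) (HdeltaF : 0 < deltaF) (Hdeltas : 0 < deltas)
  (HK : 0 < K) (Hnu : 0 < nu < 1) (Hgammas : 0 < gammas <= 1)
  (HdsdM : deltaM <= deltas)
  (HR0 : 1 < calR0 betaE nuE deltaE deltaF nu)
  (Hlambda : (betaE * nu * nuE - (nuE + deltaE) * deltaF) * deltas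
             / (gammas * (nuE + deltaE) * deltaF) < lambda) :
  let X := Xcl betaE nuE deltaE deltaM deltaF deltas K nu gammas lambda in
  let M := Mset betaE nuE deltaE deltaM K nu
             (kappa_bar betaE nuE deltaE deltaF nu gammas) in
  pos_invariant X M /\ GAS_in X M.
Proof.
  intros X M.
  assert (HH : Hyp betaE nuE deltaE deltaM deltaF deltas K nu gammas lambda)
    by (unfold Hyp; repeat split; auto; lra).
  split.
  - apply invariance; auto.
  - split.
    + intros eps Heps.
      destruct (stability _ _ _ _ _ _ _ _ _ _ HH eps Heps) as [d [Hd H]].
      exists d. split; [exact Hd|]. exact H.
    + intros z Hs H0. apply (attract _ _ _ _ _ _ _ _ _ _ HH z Hs H0).
Qed.
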